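(* Let $\mathbf x\in\mathbb F^6$ have at most one nonzero coordinate. Then $\mathcal O_{\mathbf x}$ is regular in arity $4$ if and only if either $\mathbf x=(1,0,0,0,0,0)$ (the associative relation $(a_1a_2)a_3=a_1(a_2a_3)$) or $\mathbf x=(0,0,0,0,s,0)$ with $s\neq\pm1$ (the relation $(a_1a_2)a_3=s\,a_3(a_1a_2)$, which for $s=0$ is the left-nilpotent relation $(a_1a_2)a_3=0$).
   Context: Let $\mathbb F$ be a field of characteristic $0$. Let $\mathcal T$ be the free symmetric operad over $\mathbb F$ generated by one binary operation $(a_1,a_2)\mapsto a_1a_2$ with no symmetry; its arity-$n$ component $\mathcal T(n)$ is the vector space with basis all multilinear bracketed (nonassociative) monomials in $a_1,\dots,a_n$, with the right $S_n$-action permuting arguments. For $\mathbf x=(x_1,\dots,x_6)\in\mathbb F^6$, $\mathcal O_{\mathbf x}$ denotes the quotient of $\mathcal T$ by the operad ideal $\mathcal J_{\mathbf x}$ generated by the relation (LR): $(a_1a_2)a_3 = x_1a_1(a_2a_3)+x_2a_1(a_3a_2)+x_3a_2(a_1a_3)+x_4a_2(a_3a_1)+x_5a_3(a_1a_2)+x_6a_3(a_2a_1)$. $\mathcal O_{\mathbf x}$ is regular in arity $4$ if $\mathcal O_{\mathbf x}(4)\cong\mathbb FS_4$ as $S_4$-modules. *)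

(* Defs.v *)
From HB Require Import structures.
From mathcomp Require Import all_boot all_order all_fingroup all_algebra.
Set Implicit Arguments. Unset Strict Implicit. Unset Printing Implicit Defensive.
Import Order.TTheory GRing.Theory Num.Theory.
Local Open Scope ring_scope.

(* Nonassociative bracketed monomials: leaves are letters a_{i+1} encoded by i. *)
Inductive tm := V of nat | M of tm & tm.

Fixpoint tm_eqb (s t : tm) : bool :=
  match s, t with
  | V i, V j => i == j
  | M s1 s2, M t1 t2 => tm_eqb s1 t1 && tm_eqb s2 t2
  | _, _ => false
  end.

Lemma tm_eqP : Equality.axiom tm_eqb.
Proof.
elim=> [i|s1 IH1 s2 IH2] [j|t1 t2] /=; try by constructor.
- by apply: (iffP eqP) => [->|[]].
- by apply: (iffP andP) => [[/IH1 -> /IH2 ->]|[<- <-]]; split; [apply/IH1|apply/IH2].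
Qed.

HB.instance Definition _ := hasDecEq.Build tm tm_eqP.

Fixpoint leaves (t : tm) : seq nat :=
  match t with V i => [:: i] | M s u => leaves s ++ leaves u end.

(* t is a multilinear monomial in a_1, ..., a_n (a basis element of T(n)). *)
Definition multilin (n : nat) (t : tm) : bool := perm_eq (leaves t) (iota 0 n).

(* Formal linear combinations of monomials; elements of the free vector space
   are compared through their coefficient functions. *)
Definition fsum (F : fieldType) := seq (F * tm).

Definition coef (F : fieldType) (l : fsum F) (t : tm) : F :=
  \sum_(p <- l) (if p.2 == t then p.1 else 0).

(* l is (a representative of) an element of T(n). *)
Definition inT (F : fieldType) (n : nat) (l : fsum F) : bool :=
  all (fun p => multilin n p.2) l.

(* LHS - RHS of the relation (LR) evaluated at monomials u, v, w. *)
Definition relLR (F : fieldType) (x : 'I_6 -> F) (u v w : tm) : fsum F :=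
  [:: (1, M (M u v) w);
      (- x (inord 0), M u (M v w)); (- x (inord 1), M u (M w v));
      (- x (inord 2), M v (M u w)); (- x (inord 3), M v (M w u));
      (- x (inord 4), M w (M u v)); (- x (inord 5), M w (M v u))].

Inductive ctx := Hole | CL of ctx & tm | CR of tm & ctx.

Fixpoint plug (c : ctx) (s : tm) : tm :=
  match c with
  | Hole => s
  | CL c' t => M (plug c' s) t
  | CR t c' => M t (plug c' s)
  end.

(* The generator of J indexed by a context c and monomials u, v, w:
   c[ r(u,v,w) ]. *)
Definition genJ (F : fieldType) (x : 'I_6 -> F) (g : ctx * tm * tm * tm) : fsum F :=
  let: (c, u, v, w) := g in [seq (p.1, plug c p.2) | p <- relLR x u v w].

Definition validJ (n : nat) (g : ctx * tm * tm * tm) : bool :=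
  let: (c, u, v, w) := g in multilin n (plug c (M (M u v) w)).

(* Membership in the arity-n component J_x(n) of the operad ideal generated by
   (LR): the span of all c[r(u,v,w)] which are multilinear of arity n. *)
Definition inJ (F : fieldType) (x : 'I_6 -> F) (n : nat) (l : fsum F) : Prop :=
  exists gs : seq (F * (ctx * tm * tm * tm)),
    all (fun q => validJ n q.2) gs /\
    forall t, coef l t = coef (flatten [seq [seq (q.1 * p.1, p.2) | p <- genJ x q.2] | q <- gs]) t.

(* Right S_4-action on monomials: relabel letters through sigma. *)
Definition relab (s : {perm 'I_4}) (i : nat) : nat :=
  if (i < 4)%N then val (s (inord i)) else i.

Fixpoint act4 (s : {perm 'I_4}) (t : tm) : tm :=
  match t with V i => V (relab s i) | M a b => M (act4 s a) (act4 s b) end.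

(* The group algebra F S_4 (functions S_4 -> F, delta_tau <-> tau) with the
   regular action delta_tau . sigma = delta_(tau * sigma)
   (this matches act4: act4 s1 (act4 s2 t) = act4 (s2 * s1) t). *)
Notation FS4 F := {ffun {perm 'I_4} -> F}.

Definition regact (F : fieldType) (s : {perm 'I_4}) (f : FS4 F) : FS4 F :=
  [ffun tau => f (tau * s^-1)%g].

Definition linext (F : fieldType) (phi : tm -> FS4 F) (l : fsum F) : FS4 F :=
  [ffun tau => \sum_(p <- l) p.1 * phi p.2 tau].

(* O_x(4) = T(4)/J_x(4) is isomorphic to F S_4 as S_4-modules: there is an
   S_4-equivariant surjective linear map T(4) -> F S_4 whose kernel is J_x(4). *)
Definition regular4 (F : fieldType) (x : 'I_6 -> F) : Prop :=
  exists phi : tm -> FS4 F,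
    [/\ forall (s : {perm 'I_4}) t, multilin 4 t -> phi (act4 s t) = regact s (phi t),
        forall f : FS4 F, exists l, inT 4 l /\ linext phi l = f &
        forall l, inT 4 l -> (linext phi l = [ffun => 0] <-> inJ x 4 l)].

(* Main.v *)
Require Import Defs.
From HB Require Import structures.
From mathcomp Require Import all_boot all_order all_fingroup all_algebra.
From mathcomp Require Import zify ring.
Set Warnings "-all".
Require Import Defs.
Import GRing.Theory.
Local Open Scope ring_scope.

Section Basics.
Variable F : fieldType.

Definition lin (g : tm -> F) (l : fsum F) : F := \sum_(p <- l) p.1 * g p.2.
Definition scl {T : Type} (c : F) (l : seq (F * T)) : seq (F * T) := [seq (c * p.1, p.2) | p <- l].

Lemma coef_cat (l1 l2 : fsum F) t : coef (l1 ++ l2) t = coef l1 t + coef l2 t.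
Proof. by rewrite /coef big_cat. Qed.

Lemma coef_scl c (l : fsum F) t : coef (scl c l) t = c * coef l t.
Proof.
rewrite /coef big_map big_distrr /=; apply: eq_bigr => p _.
by case: ifP; rewrite ?mulr0.
Qed.

Lemma coef_nil t : coef (nil : fsum F) t = 0.
Proof. by rewrite /coef big_nil. Qed.

Lemma coef_cons p (l : fsum F) t :
  coef (p :: l) t = (if p.2 == t then p.1 else 0) + coef l t.
Proof. by rewrite /coef big_cons. Qed.

Lemma coef_flat (x : 'I_6 -> F) (gs : seq (F * (ctx * tm * tm * tm))) t :
  coef (flatten [seq [seq (q.1 * p.1, p.2) | p <- genJ x q.2] | q <- gs]) t
  = \sum_(q <- gs) q.1 * coef (genJ x q.2) t.
Proof.
elim: gs => [|q gs IH] /=; first by rewrite coef_nil big_nil.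
by rewrite coef_cat IH big_cons -coef_scl.
Qed.

Lemma inJE (x : 'I_6 -> F) n l :
  inJ x n l <-> exists gs : seq (F * (ctx * tm * tm * tm)),
    all (fun q => validJ n q.2) gs /\
    forall t, coef l t = \sum_(q <- gs) q.1 * coef (genJ x q.2) t.
Proof.
split=> [[gs [H1 H2]]|[gs [H1 H2]]]; exists gs; split=> // t;
by rewrite H2 coef_flat.
Qed.

Lemma inJ_ext x n (l l' : fsum F) :
  (forall t, coef l t = coef l' t) -> inJ x n l -> inJ x n l'.
Proof. move=> E /inJE [gs [H1 H2]]; apply/inJE; exists gs; split=> // t; by rewrite -E. Qed.

Lemma inJ_cat x n (l1 l2 : fsum F) : inJ x n l1 -> inJ x n l2 -> inJ x n (l1 ++ l2).
Proof.
move=> /inJE [g1 [A1 B1]] /inJE [g2 [A2 B2]]; apply/inJE; exists (g1 ++ g2).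
by split=> [|t]; rewrite ?all_cat ?A1 ?A2 // coef_cat B1 B2 big_cat.
Qed.

Lemma inJ_scl x n c (l : fsum F) : inJ x n l -> inJ x n (scl c l).
Proof.
move=> /inJE [g [A B]]; apply/inJE; exists (scl c g).
split=> [|t]; first by rewrite all_map.
rewrite coef_scl B big_map big_distrr /=; apply: eq_bigr => q _; by rewrite mulrA.
Qed.

Lemma inJ_nil x n : inJ x n (nil : fsum F).
Proof. apply/inJE; exists nil; split=> // t; by rewrite coef_nil big_nil. Qed.

Lemma inJ_flatten x n (L : seq (fsum F)) : (forall l, l \in L -> inJ x n l) -> inJ x n (flatten L).
Proof.
elim: L => [|l L IH] /=; first by move=> _; exact: inJ_nil.
move=> H; apply: inJ_cat; first by apply: H; rewrite inE eqxx.
by apply: IH => l' l'L; apply: H; rewrite inE l'L orbT.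
Qed.

Lemma lin_cat g (l1 l2 : fsum F) : lin g (l1 ++ l2) = lin g l1 + lin g l2.
Proof. by rewrite /lin big_cat. Qed.

Lemma lin_scl g c (l : fsum F) : lin g (scl c l) = c * lin g l.
Proof. rewrite /lin big_map big_distrr /=; apply: eq_bigr => p _; by rewrite mulrA. Qed.

Lemma lin_coefS g (l : fsum F) (S : seq tm) :
  uniq S -> {subset map snd l <= S} ->
  lin g l = \sum_(m <- S) coef l m * g m.
Proof.
move=> uS; elim: l => [|p l IH] sub.
  by rewrite /lin big_nil; symmetry; apply: big1 => m _; rewrite coef_nil mul0r.
rewrite /lin big_cons -/(lin g l) IH; last by move=> m ml; apply: sub; rewrite inE ml orbT.
have pS : p.2 \in S by apply: sub; rewrite inE eqxx.
rewrite [RHS](eq_bigr (fun m => (if p.2 == m then p.1 * g m else 0) + coef l m * g m)); last first.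
  by move=> m _; rewrite coef_cons mulrDl; case: ifP; rewrite ?mul0r.
rewrite big_split /=; congr (_ + _).
rewrite (bigD1_seq p.2) //= eqxx big1 ?addr0 // => m.
by rewrite eq_sym => /negbTE ->.
Qed.

Lemma lin_ext g (l l' : fsum F) : (forall t, coef l t = coef l' t) -> lin g l = lin g l'.
Proof.
move=> E; pose S := undup (map snd (l ++ l')).
have uS : uniq S by exact: undup_uniq.
rewrite (@lin_coefS g l S) ?(@lin_coefS g l' S) //.
- by apply: eq_bigr => m _; rewrite E.
- by move=> m mi; rewrite mem_undup map_cat mem_cat mi orbT.
- by move=> m mi; rewrite mem_undup map_cat mem_cat mi.
Qed.

Lemma lin_flat g (x : 'I_6 -> F) (gs : seq (F * (ctx * tm * tm * tm))) :
  lin g (flatten [seq [seq (q.1 * p.1, p.2) | p <- genJ x q.2] | q <- gs])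
  = \sum_(q <- gs) q.1 * lin g (genJ x q.2).
Proof.
elim: gs => [|q gs IH] /=; first by rewrite /lin !big_nil.
by rewrite lin_cat IH big_cons -lin_scl.
Qed.

Lemma linJ g x n (l : fsum F) :
  (forall G, validJ n G -> lin g (genJ x G) = 0) -> inJ x n l -> lin g l = 0.
Proof.
move=> H [gs [A B]]; rewrite (lin_ext g _ _ B) lin_flat; elim: gs A {B} => [|q gs IH] /=; first by rewrite big_nil.
by case/andP=> A1 A2; rewrite big_cons IH // H // mulr0 add0r.
Qed.

Lemma linextE (phi : tm -> FS4 F) l tau : linext phi l tau = lin (fun t => phi t tau) l.
Proof. by rewrite /linext ffunE. Qed.

End Basics.

Arguments lin {F}.
Arguments scl {F T}.

Definition tseq (tau : {perm 'I_4}) : seq nat := [seq val (tau i) | i <- enum 'I_4].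
Definition ds (F : fieldType) (sq : seq nat) : FS4 F := [ffun tau => (tseq tau == sq)%:R].

Lemma tseq_inj : injective tseq.
Proof.
move=> t1 t2 /eq_in_map H; apply/permP => i; apply/val_inj; apply: H.
by rewrite mem_enum.
Qed.

Lemma tseq_perm tau : perm_eq (tseq tau) (iota 0 4).
Proof.
apply: uniq_perm; rewrite ?iota_uniq //.
  rewrite map_inj_uniq ?enum_uniq // => i j /val_inj; exact: perm_inj.
move=> k; rewrite mem_iota add0n; apply/mapP/idP => [[i _ ->]|kl]; first exact: ltn_ord.
exists (tau^-1 (Ordinal kl))%g; first by rewrite mem_enum.
by rewrite permKV.
Qed.

Lemma tseq_surj sq : perm_eq sq (iota 0 4) -> exists tau, tseq tau = sq.
Proof.
move=> H.
have us : uniq sq by rewrite (perm_uniq H) iota_uniq.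
have sz : size sq = 4%N by rewrite (perm_size H) size_iota.
have lt : forall i, (i < 4)%N -> (nth 0%N sq i < 4)%N.
  move=> i il; have : nth 0%N sq i \in iota 0 4 by rewrite -(perm_mem H) mem_nth ?sz.
  by rewrite mem_iota.
pose f (i : 'I_4) : 'I_4 := inord (nth 0%N sq i).
have fi : injective f.
  move=> i j /(congr1 val); rewrite /f /= !inordK ?lt //.
  by move/eqP; rewrite nth_uniq ?sz // => /eqP /val_inj.
exists (perm fi); rewrite /tseq (eq_map (g := fun i : 'I_4 => nth 0%N sq i)); last first.
  by move=> i; rewrite permE /f /= inordK ?lt.
by rewrite (map_comp (nth 0%N sq) val) val_enum_ord -sz -/(mkseq _ _) mkseq_nth.
Qed.

Lemma relabK (s : {perm 'I_4}) i : (i < 4)%N -> relab (s^-1)%g (relab s i) = i.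
Proof.
by move=> il; rewrite /relab il /= ltn_ord inord_val permK inordK.
Qed.

Lemma relab_lt (s : {perm 'I_4}) i : (i < 4)%N -> (relab s i < 4)%N.
Proof. by move=> il; rewrite /relab il ltn_ord. Qed.

Lemma tseqM tau (s : {perm 'I_4}) : tseq (tau * s^-1)%g = map (relab s^-1) (tseq tau).
Proof.
rewrite /tseq -map_comp; apply: eq_map => i /=; by rewrite /relab ltn_ord inord_val permM.
Qed.

Lemma perm_lt sq : perm_eq sq (iota 0 4) -> all (fun i => i < 4)%N sq.
Proof. move=> H; apply/allP => i; by rewrite (perm_mem H) mem_iota. Qed.

Lemma regact_ds (F : fieldType) (s : {perm 'I_4}) sq :
  all (fun i => i < 4)%N sq -> regact s (ds F sq) = ds F (map (relab s) sq).
Proof.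
move=> H; apply/ffunP => tau; rewrite !ffunE tseqM; congr ((_ : bool)%:R).
have H2 : all (fun i => i < 4)%N (tseq tau) by apply: perm_lt; exact: tseq_perm.
apply/eqP/eqP => [<-|->].
  rewrite -map_comp map_id_in // => i /(allP H2) il /=.
  by have := @relabK (s^-1)%g i il; rewrite invgK.
by rewrite -map_comp map_id_in // => i /(allP H) il /=; rewrite relabK.
Qed.

Lemma leaves_act4 s t : leaves (act4 s t) = map (relab s) (leaves t).
Proof. elim: t => [i|a IHa b IHb] //=; by rewrite IHa IHb map_cat. Qed.

Ltac pick := repeat (first [left; reflexivity | right]); reflexivity.

Definition mk1 a b c d := M (M (M (V a) (V b)) (V c)) (V d).
Definition mk2 a b c d := M (M (V a) (M (V b) (V c))) (V d).
Definition mk3 a b c d := M (M (V a) (V b)) (M (V c) (V d)).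
Definition mk4 a b c d := M (V a) (M (M (V b) (V c)) (V d)).
Definition mk5 a b c d := M (V a) (M (V b) (M (V c) (V d))).

Lemma size_leaves_gt0 t : (0 < size (leaves t))%N.
Proof. elim: t => //= a IHa b IHb; rewrite size_cat; lia. Qed.

Lemma size1 t : size (leaves t) = 1%N -> exists a, t = V a.
Proof.
case: t => [a|a b] /=; first by exists a.
have := size_leaves_gt0 a; have := size_leaves_gt0 b; rewrite size_cat; lia.
Qed.

Lemma size2 t : size (leaves t) = 2%N -> exists a b, t = M (V a) (V b).
Proof.
case: t => [a|t1 t2] //=; rewrite size_cat => H.
have := size_leaves_gt0 t1; have := size_leaves_gt0 t2 => H2 H1.
have [a ->] : exists a, t1 = V a by apply: size1; lia.
have [b ->] : exists b, t2 = V b by apply: size1; lia.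
by exists a, b.
Qed.

Lemma size3 t : size (leaves t) = 3%N ->
  exists a b c, t = M (M (V a) (V b)) (V c) \/ t = M (V a) (M (V b) (V c)).
Proof.
case: t => [a|t1 t2] //=; rewrite size_cat => H.
have := size_leaves_gt0 t1; have := size_leaves_gt0 t2 => H2 H1.
have [E|E] : size (leaves t1) = 1%N \/ size (leaves t1) = 2%N by lia.
- have [a ->] := @size1 _ E.
  have [b [c ->]] : exists b c, t2 = M (V b) (V c) by apply: size2; lia.
  by exists a, b, c; right.
- have [a [b ->]] := @size2 _ E.
  have [c ->] : exists c, t2 = V c by apply: size1; lia.
  by exists a, b, c; left.
Qed.

Lemma shape4 t : size (leaves t) = 4%N -> exists a b c d,
  (t = mk1 a b c d \/ t = mk2 a b c d \/ t = mk3 a b c d \/ t = mk4 a b c d \/ t = mk5 a b c d).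
Proof.
case: t => [a|t1 t2] //=; rewrite size_cat => H.
have := size_leaves_gt0 t1; have := size_leaves_gt0 t2 => H2 H1.
have [E|[E|E]] : (size (leaves t1) = 1 \/ size (leaves t1) = 2 \/ size (leaves t1) = 3)%N by lia.
- have [a ->] := @size1 _ E.
  have [b [c [d [->|->]]]] : exists b c d, t2 = M (M (V b) (V c)) (V d) \/ t2 = M (V b) (M (V c) (V d))
    by apply: size3; lia.
  + by exists a, b, c, d; pick.
  + by exists a, b, c, d; pick.
- have [a [b ->]] := @size2 _ E.
  have [c [d ->]] : exists c d, t2 = M (V c) (V d) by apply: size2; lia.
  by exists a, b, c, d; pick.
- have [a [b [c [->|->]]]] := @size3 _ E.
  + have [d ->] : exists d, t2 = V d by apply: size1; lia.
    by exists a, b, c, d; pick.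
  + have [d ->] : exists d, t2 = V d by apply: size1; lia.
    by exists a, b, c, d; pick.
Qed.

Lemma multilin_shape t : multilin 4 t -> exists a b c d,
  perm_eq [:: a; b; c; d] (iota 0 4) /\
  (t = mk1 a b c d \/ t = mk2 a b c d \/ t = mk3 a b c d \/ t = mk4 a b c d \/ t = mk5 a b c d).
Proof.
move=> H; have sz : size (leaves t) = 4%N by rewrite (perm_size H) size_iota.
have [a [b [c [d Hs]]]] := @shape4 _ sz; exists a, b, c, d; split=> //.
by case: Hs H => [->|[->|[->|[->|->]]]] /= H.
Qed.

Fixpoint ctxl (c : ctx) : nat :=
  match c with Hole => 0%N | CL c' t => (ctxl c' + size (leaves t))%N | CR t c' => (size (leaves t) + ctxl c')%N end.

Lemma size_plug c s : size (leaves (plug c s)) = (ctxl c + size (leaves s))%N.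
Proof. elim: c => [|c IH t|t c IH] //=; rewrite size_cat IH; lia. Qed.

Lemma ctxl0 c : ctxl c = 0%N -> c = Hole.
Proof. case: c => [|c t|t c] //=; have := size_leaves_gt0 t; lia. Qed.

Lemma validJ_shape (g : ctx * tm * tm * tm) : validJ 4 g -> exists a b c d,
  (g = (Hole, M (V a) (V b), V c, V d) \/ g = (Hole, V a, M (V b) (V c), V d) \/
      g = (Hole, V a, V b, M (V c) (V d)) \/ g = (CL Hole (V d), V a, V b, V c)
    \/ g = (CR (V d) Hole, V a, V b, V c)).
Proof.
case: g => [[[c u] v] w] /= H.
have := perm_size H; rewrite size_iota size_plug /= !size_cat => sz.
have := size_leaves_gt0 u; have := size_leaves_gt0 v; have := size_leaves_gt0 w => hw hv hu.
clear H; case: c sz => [|c t|t c] /= sz.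
- have [E|[E|E]] : (size (leaves u) = 2 \/ size (leaves v) = 2 \/ size (leaves w) = 2)%N by lia.
  + have [a [b ->]] := @size2 _ E.
    have [c ->] : exists c, v = V c by apply: size1; lia.
    have [d ->] : exists d, w = V d by apply: size1; lia.
    by exists a, b, c, d; pick.
  + have [b [c ->]] := @size2 _ E.
    have [a ->] : exists a, u = V a by apply: size1; lia.
    have [d ->] : exists d, w = V d by apply: size1; lia.
    by exists a, b, c, d; pick.
  + have [c [d ->]] := @size2 _ E.
    have [a ->] : exists a, u = V a by apply: size1; lia.
    have [b ->] : exists b, v = V b by apply: size1; lia.
    by exists a, b, c, d; pick.
- have := size_leaves_gt0 t => ht.
  have -> : c = Hole by apply: ctxl0; lia.
  have [d ->] : exists d, t = V d by apply: size1; lia.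
  have [a ->] : exists a, u = V a by apply: size1; lia.
  have [b ->] : exists b, v = V b by apply: size1; lia.
  have [c' ->] : exists c, w = V c by apply: size1; lia.
  by exists a, b, c', d; pick.
- have := size_leaves_gt0 t => ht.
  have -> : c = Hole by apply: ctxl0; lia.
  have [d ->] : exists d, t = V d by apply: size1; lia.
  have [a ->] : exists a, u = V a by apply: size1; lia.
  have [b ->] : exists b, v = V b by apply: size1; lia.
  have [c' ->] : exists c, w = V c by apply: size1; lia.
  by exists a, b, c', d; pick.
Qed.

Section LA.
Variable F : fieldType.

Lemma sum_reindex (I : finType) (G : I -> F) :
  \sum_(i : I) G i = \sum_(k < #|I|) G (enum_val k).
Proof. by rewrite -big_enum_val. Qed.

Lemma LA2 (I P : finType) : (#|P| < #|I|)%N -> forall v : I -> {ffun P -> F},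
  exists c : I -> F, (exists i, c i != 0) /\ forall s, \sum_i c i * v i s = 0.
Proof.
move=> lt v.
pose A : 'M[F]_(#|I|, #|P|) := \matrix_(i, j) v (enum_val i) (enum_val j).
have rk : (0 < \rank (kermx A))%N.
  by rewrite mxrank_ker; have := rank_leq_col A; lia.
have [i0 [j0 nz]] : exists i j, kermx A i j != 0.
  move: rk; rewrite lt0n mxrank_eq0 => /eqP nz.
  case: (pickP (fun ij : 'I__ * 'I__ => kermx A ij.1 ij.2 != 0)) => [[i j] /= H|H].
    by exists i, j.
  by case: nz; apply/matrixP => i j; move: (H (i, j)) => /= /negbFE /eqP ->; rewrite mxE.
exists (fun i => kermx A i0 (enum_rank i)); split.
  by exists (enum_val j0); rewrite enum_valK.
move=> s; transitivity ((kermx A *m A) i0 (enum_rank s)); last by rewrite mulmx_ker mxE.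
rewrite mxE sum_reindex; apply: eq_bigr => k _; by rewrite enum_valK [A _ _]mxE enum_rankK.
Qed.

Lemma LA1 (P : finType) (v : P -> {ffun P -> F}) :
  (forall f : {ffun P -> F}, exists k : P -> F, forall s, f s = \sum_t k t * v t s) ->
  forall c : P -> F, (forall s, \sum_t c t * v t s = 0) -> forall t, c t = 0.
Proof.
move=> span c dep t.
have [kk Hk] : exists kk : P -> P -> F, forall s s', ((s' == s)%:R : F) = \sum_t kk s t * v t s'.
  have H : forall s, exists k : P -> F, forall s', ((s' == s)%:R : F) = \sum_t k t * v t s'.
    move=> s; have [k Hk] := span [ffun s' => (s' == s)%:R]; exists k => s'; by rewrite -Hk ffunE.
  have [kk Hk] := fin_all_exists H; by exists kk.
pose A : 'M[F]_(#|P|) := \matrix_(i, j) v (enum_val i) (enum_val j).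
pose K : 'M[F]_(#|P|) := \matrix_(i, j) kk (enum_val i) (enum_val j).
have KA : K *m A = 1%:M.
  apply/matrixP => i j; rewrite !mxE.
  rewrite (_ : (i == j) = (enum_val j == enum_val i)); last first.
    by rewrite eq_sym; apply/eqP/eqP => [->|/enum_val_inj ->].
  rewrite Hk [RHS]sum_reindex; apply: eq_bigr => k _; by rewrite !mxE.
have AK := mulmx1C KA.
pose cr : 'rV[F]_(#|P|) := \row_k c (enum_val k).
have cA : cr *m A = 0.
  apply/matrixP => i j; rewrite !mxE; transitivity (\sum_t c t * v t (enum_val j)); last by rewrite dep.
  by rewrite [RHS]sum_reindex; apply: eq_bigr => k _; rewrite !mxE.
have : cr = 0 by rewrite -(mulmx1 cr) -AK mulmxA cA mul0mx.
move/matrixP => /(_ 0 (enum_rank t)); rewrite !mxE enum_rankK //.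
Qed.

End LA.

Lemma ifE (F : fieldType) (b : bool) (c : F) : (if b then c else 0) = c * b%:R.
Proof. by case: b; rewrite ?mulr1 ?mulr0. Qed.

Definition mk5s (s : seq nat) := mk5 (nth 0%N s 0) (nth 0%N s 1) (nth 0%N s 2) (nth 0%N s 3).
Definition mk3s (s : seq nat) := mk3 (nth 0%N s 0) (nth 0%N s 1) (nth 0%N s 2) (nth 0%N s 3).

Lemma seq4 (s : seq nat) : size s = 4%N -> exists a b c d, s = [:: a; b; c; d].
Proof. by case: s => [|a [|b [|c [|d [|]]]]] //= _; exists a, b, c, d. Qed.

Lemma leaves_mk5s s : size s = 4%N -> leaves (mk5s s) = s.
Proof. by move/seq4 => [a [b [c [d ->]]]]. Qed.

Lemma leaves_mk3s s : size s = 4%N -> leaves (mk3s s) = s.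
Proof. by move/seq4 => [a [b [c [d ->]]]]. Qed.

Lemma size_tseq tau : size (tseq tau) = 4%N.
Proof. by rewrite (perm_size (tseq_perm tau)) size_iota. Qed.

Lemma perm_size4 s : perm_eq s (iota 0 4) -> size s = 4%N.
Proof. by move/perm_size; rewrite size_iota. Qed.

Arguments seq4 {s}.
Arguments leaves_mk5s {s}.
Arguments leaves_mk3s {s}.
Arguments perm_size4 {s}.
Arguments tseq_surj {sq}.

Section Frame.
Variable F : fieldType.
Variable x : 'I_6 -> F.

Lemma lin_flatten g (L : seq (fsum F)) : lin g (flatten L) = \sum_(l <- L) lin g l.
Proof. elim: L => [|l L IH] /=; first by rewrite /lin !big_nil. by rewrite lin_cat IH big_cons. Qed.

Lemma kerE (phi : tm -> FS4 F) :
  (forall l, inT 4 l -> (linext phi l = [ffun => 0] <-> inJ x 4 l)) ->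
  forall l, inT 4 l -> inJ x 4 l -> forall s, lin (fun t => phi t s) l = 0.
Proof.
move=> H l Tl Jl s; rewrite -linextE.
by have := (proj2 (H l Tl)) Jl => ->; rewrite ffunE.
Qed.

Lemma kernel_sub (cf : tm -> F) (sq : tm -> seq nat) :
  (forall t, multilin 4 t -> perm_eq (sq t) (iota 0 4)) ->
  (forall t, multilin 4 t -> inJ x 4 [:: (1, t); (- cf t, mk5s (sq t))]) ->
  forall l, inT 4 l ->
  (forall s, lin (fun t => cf t * ds F (sq t) s) l = 0) -> inJ x 4 l.
Proof.
move=> Hsq Hred l Tl H0.
pose L1 := flatten [seq scl p.1 [:: (1, p.2); (- cf p.2, mk5s (sq p.2))] | p <- l].
have J1 : inJ x 4 L1.
  apply: inJ_flatten => l1 /mapP [p pl ->]; apply: inJ_scl; apply: Hred.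
  by move/allP: Tl => /(_ p pl).
apply: inJ_ext J1 => m.
have E : coef l m = coef L1 m + \sum_(p <- l) (if mk5s (sq p.2) == m then p.1 * cf p.2 else 0).
  rewrite /L1; elim: (l) => [|p l' IH] /=; first by rewrite !coef_nil big_nil addr0.
  rewrite !coef_cons IH big_cons /= !ifE; ring.
rewrite E; suff -> : \sum_(p <- l) (if mk5s (sq p.2) == m then p.1 * cf p.2 else 0) = 0 by rewrite addr0.
case: (boolP (has (fun p => mk5s (sq p.2) == m) l)) => [/hasP [p0 p0l /eqP Em]|/hasPn Hn]; last first.
  by rewrite big_seq big1 // => p /Hn /negbTE ->.
have mp0 : multilin 4 p0.2 by move/allP: Tl => /(_ p0 p0l).
have [tau0 Et] := tseq_surj (Hsq _ mp0).
transitivity (lin (fun t => cf t * ds F (sq t) tau0) l); last exact: H0 tau0.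
rewrite /lin big_seq [RHS]big_seq; apply: eq_bigr => p pl.
have mp : multilin 4 p.2 by move/allP: Tl => /(_ p pl).
rewrite ffunE -Em.
have -> : (mk5s (sq p.2) == mk5s (sq p0.2)) = (tseq tau0 == sq p.2).
  rewrite Et; apply/eqP/eqP => [E1|->] //.
  by rewrite -(leaves_mk5s (perm_size4 (Hsq _ mp))) E1 leaves_mk5s // (perm_size4 (Hsq _ mp0)).
by rewrite ifE; ring.
Qed.

Lemma regular_of (cf : tm -> F) (sq : tm -> seq nat) :
  (forall t, multilin 4 t -> perm_eq (sq t) (iota 0 4)) ->
  (forall s t, multilin 4 t -> cf (act4 s t) = cf t /\ sq (act4 s t) = map (relab s) (sq t)) ->
  (forall a b c d, cf (mk5 a b c d) = 1 /\ sq (mk5 a b c d) = [:: a; b; c; d]) ->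
  (forall t, multilin 4 t -> inJ x 4 [:: (1, t); (- cf t, mk5s (sq t))]) ->
  (forall g s, validJ 4 g -> lin (fun t => cf t * ds F (sq t) s) (genJ x g) = 0) ->
  regular4 x.
Proof.
move=> H1 H2 H3 H4 H5.
exists (fun t => [ffun s => cf t * ds F (sq t) s]); split.
- move=> s t mt; have [e1 e2] := H2 s t mt.
  apply/ffunP => tau; rewrite /regact !ffunE e1 e2.
  have := regact_ds F s _ (perm_lt _ (H1 _ mt)); move/ffunP => /(_ tau).
  by rewrite /regact !ffunE => ->.
- move=> f; exists [seq (f tau, mk5s (tseq tau)) | tau <- enum {perm 'I_4}]; split.
    apply/allP => p /mapP [tau _ ->] /=.
    by rewrite /multilin leaves_mk5s ?size_tseq // tseq_perm.
  apply/ffunP => s0; rewrite linextE /lin big_map big_enum /=.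
  rewrite (bigD1 s0) //= big1 ?addr0.
    have [a [b [c [d E]]]] := seq4 (size_tseq s0).
    by rewrite ffunE E /= (proj1 (H3 _ _ _ _)) (proj2 (H3 _ _ _ _)) ffunE -E eqxx mul1r mulr1.
  move=> tau ne; have [a [b [c [d E]]]] := seq4 (size_tseq (tau : {perm 'I_4})).
  rewrite ffunE E /= (proj1 (H3 _ _ _ _)) (proj2 (H3 _ _ _ _)) ffunE -E.
  by rewrite (inj_eq tseq_inj) eq_sym (negbTE ne) mul1r /= mulr0.
- move=> l Tl; split.
    move=> E; apply: (@kernel_sub cf sq H1 H4 l Tl) => s.
    move/ffunP: E => /(_ s); rewrite linextE ffunE => E; rewrite -[RHS]E /lin; apply: eq_bigr => p _; by rewrite !ffunE.
  move=> Jl; apply/ffunP => s; rewrite linextE !ffunE.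
  rewrite (_ : lin _ l = lin (fun t => cf t * ds F (sq t) s) l); last by apply: eq_bigr => p _; rewrite ffunE.
  apply: (@linJ F _ x 4 l) => [g vg|]; [exact: H5 | exact: Jl].
Qed.

End Frame.

Section Contra.
Variable F : fieldType.
Variable x : 'I_6 -> F.

Lemma sum_delta (P : finType) (a : P) (G : P -> F) : \sum_t ((t == a)%:R * G t) = G a.
Proof.
rewrite (bigD1 a) //= eqxx mul1r big1 ?addr0 // => t /negbTE ->; by rewrite mul0r.
Qed.

Lemma small_contra (B : seq nat -> tm) :
  (forall sq, perm_eq sq (iota 0 4) -> multilin 4 (B sq)) ->
  (forall t, multilin 4 t -> exists c sq, perm_eq sq (iota 0 4) /\ inJ x 4 [:: (1, t); (- c, B sq)]) ->
  (exists sq1 sq2 e, [/\ perm_eq sq1 (iota 0 4), perm_eq sq2 (iota 0 4), sq1 != sq2 &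
      inJ x 4 [:: (1, B sq1); (- e, B sq2)]]) ->
  ~ regular4 x.
Proof.
move=> HB Hred [sq1 [sq2 [e [p1 p2 ne Hd]]]] [phi [Heq Hsurj Hker]].
have KE := @kerE F x phi Hker.
pose v (tau : {perm 'I_4}) := phi (B (tseq tau)).
have Hphi : forall t, multilin 4 t -> exists c tau, forall s, phi t s = c * v tau s.
  move=> t mt; have [c [sq [psq J]]] := Hred t mt.
  have [tau Et] := tseq_surj psq.
  exists c, tau => s.
  have T : inT 4 [:: (1, t); (- c, B sq)] by rewrite /= mt HB.
  have := KE _ T J s; rewrite /lin !big_cons big_nil /v Et /=.
  by move/eqP; rewrite addr0 mul1r mulNr subr_eq0 => /eqP.
have span : forall l, inT 4 l -> exists k : {perm 'I_4} -> F,
    forall s, lin (fun t => phi t s) l = \sum_tau k tau * v tau s.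
  elim=> [|p l IH] /=.
    by move=> _; exists (fun _ => 0) => s; rewrite /lin big_nil big1 // => tau _; rewrite mul0r.
  case/andP=> mp Tl; have [k Hk] := IH Tl; have [c [tp Hc]] := Hphi _ mp.
  exists (fun tau => k tau + (tau == tp)%:R * (p.1 * c)) => s.
  move: Hk; rewrite /lin => Hk; rewrite big_cons Hk Hc.
  rewrite [RHS](eq_bigr (fun tau => k tau * v tau s + (tau == tp)%:R * (p.1 * c * v tau s))); last first.
    by move=> tau _ /=; ring.
  by rewrite big_split /= sum_delta mulrA addrC.
have [t1 E1] := tseq_surj p1; have [t2 E2] := tseq_surj p2.
pose c (tau : {perm 'I_4}) := (tau == t1)%:R - e * (tau == t2)%:R.
have dep : forall s, \sum_tau c tau * v tau s = 0.
  move=> s; rewrite (eq_bigr (fun tau => (tau == t1)%:R * v tau s - e * ((tau == t2)%:R * v tau s))); last first.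
    by move=> tau _ /=; rewrite /c; ring.
  rewrite sumrB -mulr_sumr !sum_delta.
  have T : inT 4 [:: (1, B sq1); (- e, B sq2)] by rewrite /= !HB.
  have := KE _ T Hd s; rewrite /lin !big_cons big_nil /v E1 E2 /=.
  by rewrite addr0 mul1r mulNr.
have span' : forall f : {ffun {perm 'I_4} -> F}, exists k : {perm 'I_4} -> F,
    forall s, f s = \sum_tau k tau * v tau s.
  move=> f; have [l [Tl El]] := Hsurj f; have [k Hk] := span l Tl.
  by exists k => s; rewrite -El linextE Hk.
have := @LA1 F _ v span' c dep t1.
have nt : t1 != t2 by apply: contra ne => /eqP e12; rewrite -E1 -E2 e12.
by rewrite /c eqxx (negbTE nt) mulr0 subr0 => /eqP; rewrite oner_eq0.
Qed.
Lemma big_contra (L : option {perm 'I_4} -> fsum F) (lam : option {perm 'I_4} -> tm -> F) :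
  (forall i, inT 4 (L i)) ->
  (forall j g, validJ 4 g -> lin (lam j) (genJ x g) = 0) ->
  (forall i j, lin (lam j) (L i) = (i == j)%:R) ->
  ~ regular4 x.
Proof.
move=> TL HJ Hd [phi [Heq Hsurj Hker]].
pose v i := linext phi (L i).
have lt : (#|{perm 'I_4}| < #|{: option {perm 'I_4}}|)%N by rewrite card_option.
have [c [[i0 nz] Hc]] := @LA2 F _ _ lt v.
pose l := flatten [seq scl (c i) (L i) | i <- enum {: option {perm 'I_4}}].
have Tl : inT 4 l.
  apply/allP => p /flattenP [l' /mapP [i _ ->]] /mapP [q qL ->] /=.
  by move/allP: (TL i) => /(_ q qL).
have lin_l : forall g, lin g l = \sum_i c i * lin g (L i).
  move=> g; rewrite lin_flatten big_map big_enum /=; apply: eq_bigr => i _; by rewrite lin_scl.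
have Jl : inJ x 4 l.
  apply/(Hker l Tl); apply/ffunP => s; rewrite linextE lin_l ffunE.
  transitivity (\sum_i c i * v i s); last exact: Hc s.
  by apply: eq_bigr => i _; rewrite /v linextE.
have := @linJ F (lam i0) x 4 l (HJ i0) Jl.
rewrite lin_l (eq_bigr (fun i => (i == i0)%:R * c i)); last by move=> i _; rewrite Hd mulrC.
by rewrite sum_delta => c0; rewrite c0 eqxx in nz.
Qed.

End Contra.

Lemma pt {s1 s2 s3 : seq nat} : perm_eq s2 s3 -> perm_eq s1 s2 -> perm_eq s1 s3.
Proof. by move=> H1 H2; apply: perm_trans H2 H1. Qed.
Lemma all_cons_valid (F : fieldType) (c : F) g (gs : seq (F * (ctx * tm * tm * tm))) :
  validJ 4 g -> all (fun q => validJ 4 q.2) gs -> all (fun q => validJ 4 q.2) ((c, g) :: gs).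
Proof. by move=> /= -> ->. Qed.
Lemma validJ_of c u v w : perm_eq (leaves (plug c (M (M u v) w))) (iota 0 4) -> validJ 4 (c, u, v, w).
Proof. by []. Qed.
Ltac pvalid H := repeat (apply: all_cons_valid; [apply: validJ_of; apply: (pt H); apply/seq.permP => P /=; lia|]); done.
Lemma neq0_eq (F : fieldType) (e e' : F) : e' = e -> e' != 0 -> e != 0.
Proof. by move=> ->. Qed.

Ltac coefsimp := move=> t0; rewrite /genJ /relLR /mk5s /mk3s /mk1 /mk2 /mk3 /mk4 /mk5 /= ?coef_cons ?coef_nil ?big_cons ?big_nil /= ?coef_cons ?coef_nil /=.

Lemma red_0_1 (F : fieldType) (x : 'I_6 -> F) (t : F)
  (X0 : x (inord 0) = t) (X1 : x (inord 1) = 0) (X2 : x (inord 2) = 0) (X3 : x (inord 3) = 0) (X4 : x (inord 4) = 0) (X5 : x (inord 5) = 0)  a b c d (H : perm_eq [:: a; b; c; d] (iota 0 4)) :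
  inJ x 4 [:: (1, (mk1 a b c d)); (- (t^+2), mk5s [:: a; b; c; d])].
Proof.
apply/inJE; exists [:: ((1), (Hole, (M (V a) (V b)), (V c), (V d)));
    ((t), (Hole, (V a), (V b), (M (V c) (V d))))]; split; first by pvalid H.
coefsimp; rewrite ?X0 ?X1 ?X2 ?X3 ?X4 ?X5 !ifE; ring.
Qed.

Lemma red_0_2 (F : fieldType) (x : 'I_6 -> F) (t : F)
  (X0 : x (inord 0) = t) (X1 : x (inord 1) = 0) (X2 : x (inord 2) = 0) (X3 : x (inord 3) = 0) (X4 : x (inord 4) = 0) (X5 : x (inord 5) = 0)  a b c d (H : perm_eq [:: a; b; c; d] (iota 0 4)) :
  inJ x 4 [:: (1, (mk2 a b c d)); (- (t^+2), mk5s [:: a; b; c; d])].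
Proof.
apply/inJE; exists [:: ((1), (Hole, (V a), (M (V b) (V c)), (V d)));
    ((t), ((CR (V a) Hole), (V b), (V c), (V d)))]; split; first by pvalid H.
coefsimp; rewrite ?X0 ?X1 ?X2 ?X3 ?X4 ?X5 !ifE; ring.
Qed.

Lemma red_0_3 (F : fieldType) (x : 'I_6 -> F) (t : F)
  (X0 : x (inord 0) = t) (X1 : x (inord 1) = 0) (X2 : x (inord 2) = 0) (X3 : x (inord 3) = 0) (X4 : x (inord 4) = 0) (X5 : x (inord 5) = 0)  a b c d (H : perm_eq [:: a; b; c; d] (iota 0 4)) :
  inJ x 4 [:: (1, (mk3 a b c d)); (- (t), mk5s [:: a; b; c; d])].
Proof.
apply/inJE; exists [:: ((1), (Hole, (V a), (V b), (M (V c) (V d))))]; split; first by pvalid H.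
coefsimp; rewrite ?X0 ?X1 ?X2 ?X3 ?X4 ?X5 !ifE; ring.
Qed.

Lemma red_0_4 (F : fieldType) (x : 'I_6 -> F) (t : F)
  (X0 : x (inord 0) = t) (X1 : x (inord 1) = 0) (X2 : x (inord 2) = 0) (X3 : x (inord 3) = 0) (X4 : x (inord 4) = 0) (X5 : x (inord 5) = 0)  a b c d (H : perm_eq [:: a; b; c; d] (iota 0 4)) :
  inJ x 4 [:: (1, (mk4 a b c d)); (- (t), mk5s [:: a; b; c; d])].
Proof.
apply/inJE; exists [:: ((1), ((CR (V a) Hole), (V b), (V c), (V d)))]; split; first by pvalid H.
coefsimp; rewrite ?X0 ?X1 ?X2 ?X3 ?X4 ?X5 !ifE; ring.
Qed.

Lemma red_0_5 (F : fieldType) (x : 'I_6 -> F) (t : F)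
  (X0 : x (inord 0) = t) (X1 : x (inord 1) = 0) (X2 : x (inord 2) = 0) (X3 : x (inord 3) = 0) (X4 : x (inord 4) = 0) (X5 : x (inord 5) = 0)  a b c d (H : perm_eq [:: a; b; c; d] (iota 0 4)) :
  inJ x 4 [:: (1, (mk5 a b c d)); (- (1), mk5s [:: a; b; c; d])].
Proof.
apply/inJE; exists [:: ]; split; first by pvalid H.
coefsimp; rewrite ?X0 ?X1 ?X2 ?X3 ?X4 ?X5 !ifE; ring.
Qed.

Lemma red_1_1 (F : fieldType) (x : 'I_6 -> F) (t : F)
  (X0 : x (inord 0) = 0) (X1 : x (inord 1) = t) (X2 : x (inord 2) = 0) (X3 : x (inord 3) = 0) (X4 : x (inord 4) = 0) (X5 : x (inord 5) = 0)  a b c d (H : perm_eq [:: a; b; c; d] (iota 0 4)) :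
  inJ x 4 [:: (1, (mk1 a b c d)); (- (t^+3), mk5s [:: a; d; b; c])].
Proof.
apply/inJE; exists [:: ((1), (Hole, (M (V a) (V b)), (V c), (V d)));
    ((t), (Hole, (V a), (V b), (M (V d) (V c))));
    ((t^+2), ((CR (V a) Hole), (V d), (V c), (V b)))]; split; first by pvalid H.
coefsimp; rewrite ?X0 ?X1 ?X2 ?X3 ?X4 ?X5 !ifE; ring.
Qed.

Lemma red_1_2 (F : fieldType) (x : 'I_6 -> F) (t : F)
  (X0 : x (inord 0) = 0) (X1 : x (inord 1) = t) (X2 : x (inord 2) = 0) (X3 : x (inord 3) = 0) (X4 : x (inord 4) = 0) (X5 : x (inord 5) = 0)  a b c d (H : perm_eq [:: a; b; c; d] (iota 0 4)) :
  inJ x 4 [:: (1, (mk2 a b c d)); (- (t), mk5s [:: a; d; b; c])].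
Proof.
apply/inJE; exists [:: ((1), (Hole, (V a), (M (V b) (V c)), (V d)))]; split; first by pvalid H.
coefsimp; rewrite ?X0 ?X1 ?X2 ?X3 ?X4 ?X5 !ifE; ring.
Qed.

Lemma red_1_3 (F : fieldType) (x : 'I_6 -> F) (t : F)
  (X0 : x (inord 0) = 0) (X1 : x (inord 1) = t) (X2 : x (inord 2) = 0) (X3 : x (inord 3) = 0) (X4 : x (inord 4) = 0) (X5 : x (inord 5) = 0)  a b c d (H : perm_eq [:: a; b; c; d] (iota 0 4)) :
  inJ x 4 [:: (1, (mk3 a b c d)); (- (t^+2), mk5s [:: a; c; b; d])].
Proof.
apply/inJE; exists [:: ((1), (Hole, (V a), (V b), (M (V c) (V d))));
    ((t), ((CR (V a) Hole), (V c), (V d), (V b)))]; split; first by pvalid H.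
coefsimp; rewrite ?X0 ?X1 ?X2 ?X3 ?X4 ?X5 !ifE; ring.
Qed.

Lemma red_1_4 (F : fieldType) (x : 'I_6 -> F) (t : F)
  (X0 : x (inord 0) = 0) (X1 : x (inord 1) = t) (X2 : x (inord 2) = 0) (X3 : x (inord 3) = 0) (X4 : x (inord 4) = 0) (X5 : x (inord 5) = 0)  a b c d (H : perm_eq [:: a; b; c; d] (iota 0 4)) :
  inJ x 4 [:: (1, (mk4 a b c d)); (- (t), mk5s [:: a; b; d; c])].
Proof.
apply/inJE; exists [:: ((1), ((CR (V a) Hole), (V b), (V c), (V d)))]; split; first by pvalid H.
coefsimp; rewrite ?X0 ?X1 ?X2 ?X3 ?X4 ?X5 !ifE; ring.
Qed.

Lemma red_1_5 (F : fieldType) (x : 'I_6 -> F) (t : F)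
  (X0 : x (inord 0) = 0) (X1 : x (inord 1) = t) (X2 : x (inord 2) = 0) (X3 : x (inord 3) = 0) (X4 : x (inord 4) = 0) (X5 : x (inord 5) = 0)  a b c d (H : perm_eq [:: a; b; c; d] (iota 0 4)) :
  inJ x 4 [:: (1, (mk5 a b c d)); (- (1), mk5s [:: a; b; c; d])].
Proof.
apply/inJE; exists [:: ]; split; first by pvalid H.
coefsimp; rewrite ?X0 ?X1 ?X2 ?X3 ?X4 ?X5 !ifE; ring.
Qed.

Lemma red_2_1 (F : fieldType) (x : 'I_6 -> F) (t : F)
  (X0 : x (inord 0) = 0) (X1 : x (inord 1) = 0) (X2 : x (inord 2) = t) (X3 : x (inord 3) = 0) (X4 : x (inord 4) = 0) (X5 : x (inord 5) = 0)  a b c d (H : perm_eq [:: a; b; c; d] (iota 0 4)) :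
  inJ x 4 [:: (1, (mk1 a b c d)); (- (t^+2), mk5s [:: c; b; a; d])].
Proof.
apply/inJE; exists [:: ((1), (Hole, (M (V a) (V b)), (V c), (V d)));
    ((t), ((CR (V c) Hole), (V a), (V b), (V d)))]; split; first by pvalid H.
coefsimp; rewrite ?X0 ?X1 ?X2 ?X3 ?X4 ?X5 !ifE; ring.
Qed.

Lemma red_2_2 (F : fieldType) (x : 'I_6 -> F) (t : F)
  (X0 : x (inord 0) = 0) (X1 : x (inord 1) = 0) (X2 : x (inord 2) = t) (X3 : x (inord 3) = 0) (X4 : x (inord 4) = 0) (X5 : x (inord 5) = 0)  a b c d (H : perm_eq [:: a; b; c; d] (iota 0 4)) :
  inJ x 4 [:: (1, (mk2 a b c d)); (- (t^+2), mk5s [:: c; b; a; d])].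
Proof.
apply/inJE; exists [:: ((1), (Hole, (V a), (M (V b) (V c)), (V d)));
    ((t), (Hole, (V b), (V c), (M (V a) (V d))))]; split; first by pvalid H.
coefsimp; rewrite ?X0 ?X1 ?X2 ?X3 ?X4 ?X5 !ifE; ring.
Qed.

Lemma red_2_3 (F : fieldType) (x : 'I_6 -> F) (t : F)
  (X0 : x (inord 0) = 0) (X1 : x (inord 1) = 0) (X2 : x (inord 2) = t) (X3 : x (inord 3) = 0) (X4 : x (inord 4) = 0) (X5 : x (inord 5) = 0)  a b c d (H : perm_eq [:: a; b; c; d] (iota 0 4)) :
  inJ x 4 [:: (1, (mk3 a b c d)); (- (t), mk5s [:: b; a; c; d])].
Proof.
apply/inJE; exists [:: ((1), (Hole, (V a), (V b), (M (V c) (V d))))]; split; first by pvalid H.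
coefsimp; rewrite ?X0 ?X1 ?X2 ?X3 ?X4 ?X5 !ifE; ring.
Qed.

Lemma red_2_4 (F : fieldType) (x : 'I_6 -> F) (t : F)
  (X0 : x (inord 0) = 0) (X1 : x (inord 1) = 0) (X2 : x (inord 2) = t) (X3 : x (inord 3) = 0) (X4 : x (inord 4) = 0) (X5 : x (inord 5) = 0)  a b c d (H : perm_eq [:: a; b; c; d] (iota 0 4)) :
  inJ x 4 [:: (1, (mk4 a b c d)); (- (t), mk5s [:: a; c; b; d])].
Proof.
apply/inJE; exists [:: ((1), ((CR (V a) Hole), (V b), (V c), (V d)))]; split; first by pvalid H.
coefsimp; rewrite ?X0 ?X1 ?X2 ?X3 ?X4 ?X5 !ifE; ring.
Qed.

Lemma red_2_5 (F : fieldType) (x : 'I_6 -> F) (t : F)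
  (X0 : x (inord 0) = 0) (X1 : x (inord 1) = 0) (X2 : x (inord 2) = t) (X3 : x (inord 3) = 0) (X4 : x (inord 4) = 0) (X5 : x (inord 5) = 0)  a b c d (H : perm_eq [:: a; b; c; d] (iota 0 4)) :
  inJ x 4 [:: (1, (mk5 a b c d)); (- (1), mk5s [:: a; b; c; d])].
Proof.
apply/inJE; exists [:: ]; split; first by pvalid H.
coefsimp; rewrite ?X0 ?X1 ?X2 ?X3 ?X4 ?X5 !ifE; ring.
Qed.

Lemma red_3_1 (F : fieldType) (x : 'I_6 -> F) (t : F)
  (X0 : x (inord 0) = 0) (X1 : x (inord 1) = 0) (X2 : x (inord 2) = 0) (X3 : x (inord 3) = t) (X4 : x (inord 4) = 0) (X5 : x (inord 5) = 0)  a b c d (H : perm_eq [:: a; b; c; d] (iota 0 4)) :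
  inJ x 4 [:: (1, (mk1 a b c d)); (- (t), mk5s [:: c; d; a; b])].
Proof.
apply/inJE; exists [:: ((1), (Hole, (M (V a) (V b)), (V c), (V d)))]; split; first by pvalid H.
coefsimp; rewrite ?X0 ?X1 ?X2 ?X3 ?X4 ?X5 !ifE; ring.
Qed.

Lemma red_3_2 (F : fieldType) (x : 'I_6 -> F) (t : F)
  (X0 : x (inord 0) = 0) (X1 : x (inord 1) = 0) (X2 : x (inord 2) = 0) (X3 : x (inord 3) = t) (X4 : x (inord 4) = 0) (X5 : x (inord 5) = 0)  a b c d (H : perm_eq [:: a; b; c; d] (iota 0 4)) :
  inJ x 4 [:: (1, (mk2 a b c d)); (- (t^+3), mk5s [:: c; a; b; d])].
Proof.
apply/inJE; exists [:: ((1), (Hole, (V a), (M (V b) (V c)), (V d)));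
    ((t), (Hole, (V b), (V c), (M (V d) (V a))));
    ((t^+2), ((CR (V c) Hole), (V d), (V a), (V b)))]; split; first by pvalid H.
coefsimp; rewrite ?X0 ?X1 ?X2 ?X3 ?X4 ?X5 !ifE; ring.
Qed.

Lemma red_3_3 (F : fieldType) (x : 'I_6 -> F) (t : F)
  (X0 : x (inord 0) = 0) (X1 : x (inord 1) = 0) (X2 : x (inord 2) = 0) (X3 : x (inord 3) = t) (X4 : x (inord 4) = 0) (X5 : x (inord 5) = 0)  a b c d (H : perm_eq [:: a; b; c; d] (iota 0 4)) :
  inJ x 4 [:: (1, (mk3 a b c d)); (- (t^+2), mk5s [:: b; d; a; c])].
Proof.
apply/inJE; exists [:: ((1), (Hole, (V a), (V b), (M (V c) (V d))));
    ((t), ((CR (V b) Hole), (V c), (V d), (V a)))]; split; first by pvalid H.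
coefsimp; rewrite ?X0 ?X1 ?X2 ?X3 ?X4 ?X5 !ifE; ring.
Qed.

Lemma red_3_4 (F : fieldType) (x : 'I_6 -> F) (t : F)
  (X0 : x (inord 0) = 0) (X1 : x (inord 1) = 0) (X2 : x (inord 2) = 0) (X3 : x (inord 3) = t) (X4 : x (inord 4) = 0) (X5 : x (inord 5) = 0)  a b c d (H : perm_eq [:: a; b; c; d] (iota 0 4)) :
  inJ x 4 [:: (1, (mk4 a b c d)); (- (t), mk5s [:: a; c; d; b])].
Proof.
apply/inJE; exists [:: ((1), ((CR (V a) Hole), (V b), (V c), (V d)))]; split; first by pvalid H.
coefsimp; rewrite ?X0 ?X1 ?X2 ?X3 ?X4 ?X5 !ifE; ring.
Qed.

Lemma red_3_5 (F : fieldType) (x : 'I_6 -> F) (t : F)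
  (X0 : x (inord 0) = 0) (X1 : x (inord 1) = 0) (X2 : x (inord 2) = 0) (X3 : x (inord 3) = t) (X4 : x (inord 4) = 0) (X5 : x (inord 5) = 0)  a b c d (H : perm_eq [:: a; b; c; d] (iota 0 4)) :
  inJ x 4 [:: (1, (mk5 a b c d)); (- (1), mk5s [:: a; b; c; d])].
Proof.
apply/inJE; exists [:: ]; split; first by pvalid H.
coefsimp; rewrite ?X0 ?X1 ?X2 ?X3 ?X4 ?X5 !ifE; ring.
Qed.

Lemma red_4_1 (F : fieldType) (x : 'I_6 -> F) (t : F)
  (X0 : x (inord 0) = 0) (X1 : x (inord 1) = 0) (X2 : x (inord 2) = 0) (X3 : x (inord 3) = 0) (X4 : x (inord 4) = t) (X5 : x (inord 5) = 0)  a b c d (H : perm_eq [:: a; b; c; d] (iota 0 4)) :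
  inJ x 4 [:: (1, (mk1 a b c d)); (- (t^+2), mk5s [:: d; c; a; b])].
Proof.
apply/inJE; exists [:: ((1), (Hole, (M (V a) (V b)), (V c), (V d)));
    ((t), ((CR (V d) Hole), (V a), (V b), (V c)))]; split; first by pvalid H.
coefsimp; rewrite ?X0 ?X1 ?X2 ?X3 ?X4 ?X5 !ifE; ring.
Qed.

Lemma red_4_2 (F : fieldType) (x : 'I_6 -> F) (t : F)
  (X0 : x (inord 0) = 0) (X1 : x (inord 1) = 0) (X2 : x (inord 2) = 0) (X3 : x (inord 3) = 0) (X4 : x (inord 4) = t) (X5 : x (inord 5) = 0)  a b c d (H : perm_eq [:: a; b; c; d] (iota 0 4)) :
  inJ x 4 [:: (1, (mk2 a b c d)); (- (t), mk5s [:: d; a; b; c])].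
Proof.
apply/inJE; exists [:: ((1), (Hole, (V a), (M (V b) (V c)), (V d)))]; split; first by pvalid H.
coefsimp; rewrite ?X0 ?X1 ?X2 ?X3 ?X4 ?X5 !ifE; ring.
Qed.

Lemma red_4_4 (F : fieldType) (x : 'I_6 -> F) (t : F)
  (X0 : x (inord 0) = 0) (X1 : x (inord 1) = 0) (X2 : x (inord 2) = 0) (X3 : x (inord 3) = 0) (X4 : x (inord 4) = t) (X5 : x (inord 5) = 0)  a b c d (H : perm_eq [:: a; b; c; d] (iota 0 4)) :
  inJ x 4 [:: (1, (mk4 a b c d)); (- (t), mk5s [:: a; d; b; c])].
Proof.
apply/inJE; exists [:: ((1), ((CR (V a) Hole), (V b), (V c), (V d)))]; split; first by pvalid H.
coefsimp; rewrite ?X0 ?X1 ?X2 ?X3 ?X4 ?X5 !ifE; ring.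
Qed.

Lemma red_4_5 (F : fieldType) (x : 'I_6 -> F) (t : F)
  (X0 : x (inord 0) = 0) (X1 : x (inord 1) = 0) (X2 : x (inord 2) = 0) (X3 : x (inord 3) = 0) (X4 : x (inord 4) = t) (X5 : x (inord 5) = 0)  a b c d (H : perm_eq [:: a; b; c; d] (iota 0 4)) :
  inJ x 4 [:: (1, (mk5 a b c d)); (- (1), mk5s [:: a; b; c; d])].
Proof.
apply/inJE; exists [:: ]; split; first by pvalid H.
coefsimp; rewrite ?X0 ?X1 ?X2 ?X3 ?X4 ?X5 !ifE; ring.
Qed.

Lemma red_5_1 (F : fieldType) (x : 'I_6 -> F) (t : F)
  (X0 : x (inord 0) = 0) (X1 : x (inord 1) = 0) (X2 : x (inord 2) = 0) (X3 : x (inord 3) = 0) (X4 : x (inord 4) = 0) (X5 : x (inord 5) = t)  a b c d (H : perm_eq [:: a; b; c; d] (iota 0 4)) :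
  inJ x 4 [:: (1, (mk1 a b c d)); (- (t), mk5s [:: d; c; a; b])].
Proof.
apply/inJE; exists [:: ((1), (Hole, (M (V a) (V b)), (V c), (V d)))]; split; first by pvalid H.
coefsimp; rewrite ?X0 ?X1 ?X2 ?X3 ?X4 ?X5 !ifE; ring.
Qed.

Lemma red_5_2 (F : fieldType) (x : 'I_6 -> F) (t : F)
  (X0 : x (inord 0) = 0) (X1 : x (inord 1) = 0) (X2 : x (inord 2) = 0) (X3 : x (inord 3) = 0) (X4 : x (inord 4) = 0) (X5 : x (inord 5) = t)  a b c d (H : perm_eq [:: a; b; c; d] (iota 0 4)) :
  inJ x 4 [:: (1, (mk2 a b c d)); (- (t^+2), mk5s [:: d; a; c; b])].
Proof.
apply/inJE; exists [:: ((1), (Hole, (V a), (M (V b) (V c)), (V d)));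
    ((t), ((CR (V d) Hole), (V b), (V c), (V a)))]; split; first by pvalid H.
coefsimp; rewrite ?X0 ?X1 ?X2 ?X3 ?X4 ?X5 !ifE; ring.
Qed.

Lemma red_5_4 (F : fieldType) (x : 'I_6 -> F) (t : F)
  (X0 : x (inord 0) = 0) (X1 : x (inord 1) = 0) (X2 : x (inord 2) = 0) (X3 : x (inord 3) = 0) (X4 : x (inord 4) = 0) (X5 : x (inord 5) = t)  a b c d (H : perm_eq [:: a; b; c; d] (iota 0 4)) :
  inJ x 4 [:: (1, (mk4 a b c d)); (- (t), mk5s [:: a; d; c; b])].
Proof.
apply/inJE; exists [:: ((1), ((CR (V a) Hole), (V b), (V c), (V d)))]; split; first by pvalid H.
coefsimp; rewrite ?X0 ?X1 ?X2 ?X3 ?X4 ?X5 !ifE; ring.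
Qed.

Lemma red_5_5 (F : fieldType) (x : 'I_6 -> F) (t : F)
  (X0 : x (inord 0) = 0) (X1 : x (inord 1) = 0) (X2 : x (inord 2) = 0) (X3 : x (inord 3) = 0) (X4 : x (inord 4) = 0) (X5 : x (inord 5) = t)  a b c d (H : perm_eq [:: a; b; c; d] (iota 0 4)) :
  inJ x 4 [:: (1, (mk5 a b c d)); (- (1), mk5s [:: a; b; c; d])].
Proof.
apply/inJE; exists [:: ]; split; first by pvalid H.
coefsimp; rewrite ?X0 ?X1 ?X2 ?X3 ?X4 ?X5 !ifE; ring.
Qed.

Lemma red_4_3 (F : fieldType) (x : 'I_6 -> F) (t : F)
  (X0 : x (inord 0) = 0) (X1 : x (inord 1) = 0) (X2 : x (inord 2) = 0) (X3 : x (inord 3) = 0) (X4 : x (inord 4) = t) (X5 : x (inord 5) = 0) (nz : 1 - t^+2 != 0) a b c d (H : perm_eq [:: a; b; c; d] (iota 0 4)) :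
  inJ x 4 [:: (1, mk3 a b c d); (- 0, mk5s [:: a; b; c; d])].
Proof.
apply/inJE; exists [:: (((1) / (1 + (- t^+2))), (Hole, (V a), (V b), (M (V c) (V d))));
    (((t) / (1 + (- t^+2))), (Hole, (V c), (V d), (M (V a) (V b))))]; split; first by pvalid H.
coefsimp; rewrite ?X0 ?X1 ?X2 ?X3 ?X4 ?X5 !ifE; field; try by []; apply: (@neq0_eq _ _ _ _ nz); ring.
Qed.

Lemma b5in5 (F : fieldType) (x : 'I_6 -> F) (t : F)
  (X0 : x (inord 0) = 0) (X1 : x (inord 1) = 0) (X2 : x (inord 2) = 0) (X3 : x (inord 3) = 0) (X4 : x (inord 4) = 0) (X5 : x (inord 5) = t) (nz : t^+3 - t != 0) a b c d (H : perm_eq [:: a; b; c; d] (iota 0 4)) :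
  inJ x 4 [:: (1, mk5 a b c d)].
Proof.
apply/inJE; exists [:: (((1) / ((- t) + t^+3)), (Hole, (M (V c) (V d)), (V b), (V a)));
    ((((- 1)) / ((- t) + t^+3)), ((CL Hole (V a)), (V c), (V d), (V b)));
    ((((- t)) / ((- t) + t^+3)), (Hole, (V b), (M (V d) (V c)), (V a)));
    ((((- t^+2)) / ((- t) + t^+3)), ((CR (V a) Hole), (V d), (V c), (V b)))]; split; first by pvalid H.
coefsimp; rewrite ?X0 ?X1 ?X2 ?X3 ?X4 ?X5 !ifE; field; try by []; apply: (@neq0_eq _ _ _ _ nz); ring.
Qed.

Lemma z5_1 (F : fieldType) (x : 'I_6 -> F) (t : F)
  (X0 : x (inord 0) = 0) (X1 : x (inord 1) = 0) (X2 : x (inord 2) = 0) (X3 : x (inord 3) = 0) (X4 : x (inord 4) = 0) (X5 : x (inord 5) = t) (nz : t^+3 - t != 0) a b c d (H : perm_eq [:: a; b; c; d] (iota 0 4)) :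
  inJ x 4 [:: (1, mk1 a b c d); (- 0, mk3s [:: a; b; c; d])].
Proof.
apply/inJE; exists [:: ((1), (Hole, (M (V a) (V b)), (V c), (V d)));
    (((t) / ((- t) + t^+3)), (Hole, (M (V a) (V b)), (V c), (V d)));
    ((((- t)) / ((- t) + t^+3)), ((CL Hole (V d)), (V a), (V b), (V c)));
    ((((- t^+2)) / ((- t) + t^+3)), (Hole, (V c), (M (V b) (V a)), (V d)));
    ((((- t^+3)) / ((- t) + t^+3)), ((CR (V d) Hole), (V b), (V a), (V c)))]; split; first by pvalid H.
coefsimp; rewrite ?X0 ?X1 ?X2 ?X3 ?X4 ?X5 !ifE; field; try by []; apply: (@neq0_eq _ _ _ _ nz); ring.
Qed.

Lemma z5_2 (F : fieldType) (x : 'I_6 -> F) (t : F)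
  (X0 : x (inord 0) = 0) (X1 : x (inord 1) = 0) (X2 : x (inord 2) = 0) (X3 : x (inord 3) = 0) (X4 : x (inord 4) = 0) (X5 : x (inord 5) = t) (nz : t^+3 - t != 0) a b c d (H : perm_eq [:: a; b; c; d] (iota 0 4)) :
  inJ x 4 [:: (1, mk2 a b c d); (- 0, mk3s [:: a; b; c; d])].
Proof.
apply/inJE; exists [:: ((1), (Hole, (V a), (M (V b) (V c)), (V d)));
    ((t), ((CR (V d) Hole), (V b), (V c), (V a)));
    (((t^+2) / ((- t) + t^+3)), (Hole, (M (V c) (V b)), (V a), (V d)));
    ((((- t^+2)) / ((- t) + t^+3)), ((CL Hole (V d)), (V c), (V b), (V a)));
    ((((- t^+3)) / ((- t) + t^+3)), (Hole, (V a), (M (V b) (V c)), (V d)));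
    ((((- t^+4)) / ((- t) + t^+3)), ((CR (V d) Hole), (V b), (V c), (V a)))]; split; first by pvalid H.
coefsimp; rewrite ?X0 ?X1 ?X2 ?X3 ?X4 ?X5 !ifE; field; try by []; apply: (@neq0_eq _ _ _ _ nz); ring.
Qed.

Lemma z5_4 (F : fieldType) (x : 'I_6 -> F) (t : F)
  (X0 : x (inord 0) = 0) (X1 : x (inord 1) = 0) (X2 : x (inord 2) = 0) (X3 : x (inord 3) = 0) (X4 : x (inord 4) = 0) (X5 : x (inord 5) = t) (nz : t^+3 - t != 0) a b c d (H : perm_eq [:: a; b; c; d] (iota 0 4)) :
  inJ x 4 [:: (1, mk4 a b c d); (- 0, mk3s [:: a; b; c; d])].
Proof.
apply/inJE; exists [:: ((1), ((CR (V a) Hole), (V b), (V c), (V d)));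
    (((t) / ((- t) + t^+3)), (Hole, (M (V c) (V b)), (V d), (V a)));
    ((((- t)) / ((- t) + t^+3)), ((CL Hole (V a)), (V c), (V b), (V d)));
    ((((- t^+2)) / ((- t) + t^+3)), (Hole, (V d), (M (V b) (V c)), (V a)));
    ((((- t^+3)) / ((- t) + t^+3)), ((CR (V a) Hole), (V b), (V c), (V d)))]; split; first by pvalid H.
coefsimp; rewrite ?X0 ?X1 ?X2 ?X3 ?X4 ?X5 !ifE; field; try by []; apply: (@neq0_eq _ _ _ _ nz); ring.
Qed.

Lemma z5_5 (F : fieldType) (x : 'I_6 -> F) (t : F)
  (X0 : x (inord 0) = 0) (X1 : x (inord 1) = 0) (X2 : x (inord 2) = 0) (X3 : x (inord 3) = 0) (X4 : x (inord 4) = 0) (X5 : x (inord 5) = t) (nz : t^+3 - t != 0) a b c d (H : perm_eq [:: a; b; c; d] (iota 0 4)) :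
  inJ x 4 [:: (1, mk5 a b c d); (- 0, mk3s [:: a; b; c; d])].
Proof.
apply/inJE; exists [:: (((1) / ((- t) + t^+3)), (Hole, (M (V c) (V d)), (V b), (V a)));
    ((((- 1)) / ((- t) + t^+3)), ((CL Hole (V a)), (V c), (V d), (V b)));
    ((((- t)) / ((- t) + t^+3)), (Hole, (V b), (M (V d) (V c)), (V a)));
    ((((- t^+2)) / ((- t) + t^+3)), ((CR (V a) Hole), (V d), (V c), (V b)))]; split; first by pvalid H.
coefsimp; rewrite ?X0 ?X1 ?X2 ?X3 ?X4 ?X5 !ifE; field; try by []; apply: (@neq0_eq _ _ _ _ nz); ring.
Qed.

Lemma dep_0 (F : fieldType) (x : 'I_6 -> F) (t : F)
  (X0 : x (inord 0) = t) (X1 : x (inord 1) = 0) (X2 : x (inord 2) = 0) (X3 : x (inord 3) = 0) (X4 : x (inord 4) = 0) (X5 : x (inord 5) = 0) (nz : ((- t^+2) + t^+3) != 0) :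
  inJ x 4 [:: (1, (mk5s [:: 0; 1; 2; 3])); (- 0, (mk5s [:: 0; 1; 3; 2]))].
Proof.
apply/inJE; exists [:: (((1) / ((- t^+2) + t^+3)), (Hole, (M (V 0) (V 1)), (V 2), (V 3)));
    (((t) / ((- t^+2) + t^+3)), (Hole, (V 0), (V 1), (M (V 2) (V 3))));
    ((((- 1)) / ((- t^+2) + t^+3)), ((CL Hole (V 3)), (V 0), (V 1), (V 2)));
    ((((- t)) / ((- t^+2) + t^+3)), (Hole, (V 0), (M (V 1) (V 2)), (V 3)));
    ((((- t^+2)) / ((- t^+2) + t^+3)), ((CR (V 0) Hole), (V 1), (V 2), (V 3)))]; split; first by [].
coefsimp; rewrite ?X0 ?X1 ?X2 ?X3 ?X4 ?X5 !ifE; field; try by []; apply: (@neq0_eq _ _ _ _ nz); ring.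
Qed.

Lemma dep_1 (F : fieldType) (x : 'I_6 -> F) (t : F)
  (X0 : x (inord 0) = 0) (X1 : x (inord 1) = t) (X2 : x (inord 2) = 0) (X3 : x (inord 3) = 0) (X4 : x (inord 4) = 0) (X5 : x (inord 5) = 0) (nz : t != 0) :
  inJ x 4 [:: (1, (mk5s [:: 0; 3; 1; 2])); (- ((t^+2) / (t^+3)), (mk5s [:: 0; 3; 2; 1]))].
Proof.
apply/inJE; exists [:: ((((- 1)) / (t^+3)), (Hole, (M (V 0) (V 1)), (V 2), (V 3)));
    ((((- t)) / (t^+3)), (Hole, (V 0), (V 1), (M (V 3) (V 2))));
    ((((- t^+2)) / (t^+3)), ((CR (V 0) Hole), (V 3), (V 2), (V 1)));
    (((1) / (t^+3)), ((CL Hole (V 3)), (V 0), (V 1), (V 2)));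
    (((t) / (t^+3)), (Hole, (V 0), (M (V 2) (V 1)), (V 3)))]; split; first by [].
coefsimp; rewrite ?X0 ?X1 ?X2 ?X3 ?X4 ?X5 !ifE; field; try by []; apply: (@neq0_eq _ _ _ _ nz); ring.
Qed.

Lemma dep_2 (F : fieldType) (x : 'I_6 -> F) (t : F)
  (X0 : x (inord 0) = 0) (X1 : x (inord 1) = 0) (X2 : x (inord 2) = t) (X3 : x (inord 3) = 0) (X4 : x (inord 4) = 0) (X5 : x (inord 5) = 0) (nz : t != 0) :
  inJ x 4 [:: (1, (mk5s [:: 2; 1; 0; 3])); (- ((t^+3) / (t^+2)), (mk5s [:: 2; 0; 1; 3]))].
Proof.
apply/inJE; exists [:: ((((- 1)) / (t^+2)), (Hole, (M (V 0) (V 1)), (V 2), (V 3)));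
    ((((- t)) / (t^+2)), ((CR (V 2) Hole), (V 0), (V 1), (V 3)));
    (((1) / (t^+2)), ((CL Hole (V 3)), (V 0), (V 1), (V 2)));
    (((t) / (t^+2)), (Hole, (V 1), (M (V 0) (V 2)), (V 3)));
    (((t^+2) / (t^+2)), (Hole, (V 0), (V 2), (M (V 1) (V 3))))]; split; first by [].
coefsimp; rewrite ?X0 ?X1 ?X2 ?X3 ?X4 ?X5 !ifE; field; try by []; apply: (@neq0_eq _ _ _ _ nz); ring.
Qed.

Lemma dep_3 (F : fieldType) (x : 'I_6 -> F) (t : F)
  (X0 : x (inord 0) = 0) (X1 : x (inord 1) = 0) (X2 : x (inord 2) = 0) (X3 : x (inord 3) = t) (X4 : x (inord 4) = 0) (X5 : x (inord 5) = 0) (nz : t != 0) :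
  inJ x 4 [:: (1, (mk5s [:: 2; 3; 0; 1])); (- ((t^+4) / (t)), (mk5s [:: 0; 1; 2; 3]))].
Proof.
apply/inJE; exists [:: ((((- 1)) / (t)), (Hole, (M (V 0) (V 1)), (V 2), (V 3)));
    (((1) / (t)), ((CL Hole (V 3)), (V 0), (V 1), (V 2)));
    (((t) / (t)), (Hole, (V 1), (M (V 2) (V 0)), (V 3)));
    (((t^+2) / (t)), (Hole, (V 2), (V 0), (M (V 3) (V 1))));
    (((t^+3) / (t)), ((CR (V 0) Hole), (V 3), (V 1), (V 2)))]; split; first by [].
coefsimp; rewrite ?X0 ?X1 ?X2 ?X3 ?X4 ?X5 !ifE; field; try by []; apply: (@neq0_eq _ _ _ _ nz); ring.
Qed.

Lemma dep_5 (F : fieldType) (x : 'I_6 -> F) (t : F)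
  (X0 : x (inord 0) = 0) (X1 : x (inord 1) = 0) (X2 : x (inord 2) = 0) (X3 : x (inord 3) = 0) (X4 : x (inord 4) = 0) (X5 : x (inord 5) = t)  :
  inJ x 4 [:: (1, mk3s [:: 0; 1; 2; 3]); (- t, mk3s [:: 2; 3; 1; 0])].
Proof.
apply/inJE; exists [:: ((1), (Hole, (V 0), (V 1), (M (V 2) (V 3))))]; split; first by [].
coefsimp; rewrite ?X0 ?X1 ?X2 ?X3 ?X4 ?X5 !ifE; ring.
Qed.

Definition nf4 (F : fieldType) (s : F) (t : tm) : F * seq nat :=
  match t with
  | M (M (M (V a) (V b)) (V c)) (V d) => (s ^+ 2, [:: d; c; a; b])
  | M (M (V a) (M (V b) (V c))) (V d) => (s, [:: d; a; b; c])
  | M (V a) (M (M (V b) (V c)) (V d)) => (s, [:: a; d; b; c])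
  | M (V a) (M (V b) (M (V c) (V d))) => (1, [:: a; b; c; d])
  | _ => (0, leaves t)
  end.

Definition nf5 (F : fieldType) (s : F) (t : tm) : F * seq nat :=
  match t with
  | M (M (M (V a) (V b)) (V c)) (V d) => (s, [:: d; c; a; b])
  | M (M (V a) (M (V b) (V c))) (V d) => (s ^+ 2, [:: d; a; c; b])
  | M (V a) (M (M (V b) (V c)) (V d)) => (s, [:: a; d; c; b])
  | M (V a) (M (V b) (M (V c) (V d))) => (1, [:: a; b; c; d])
  | _ => (0, leaves t)
  end.

Definition mu4 (F : fieldType) (s : F) (t : tm) : F :=
  match t with
  | M (M (V a) (V b)) (M (V c) (V d)) =>
      ([:: a; b; c; d] == [:: 0; 1; 2; 3]%N)%:R + s * ([:: c; d; a; b] == [:: 0; 1; 2; 3]%N)%:R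
  | _ => 0
  end.

Definition mu5 (F : fieldType) (s : F) (t : tm) : F :=
  match t with
  | M (M (V a) (V b)) (M (V c) (V d)) =>
      ([:: a; b; c; d] == [:: 0; 1; 2; 3]%N)%:R + s * ([:: c; d; b; a] == [:: 0; 1; 2; 3]%N)%:R
      + s ^+ 2 * ([:: b; a; d; c] == [:: 0; 1; 2; 3]%N)%:R + s ^+ 3 * ([:: d; c; a; b] == [:: 0; 1; 2; 3]%N)%:R
  | _ => 0
  end.

Arguments nf4 {F}.
Arguments nf5 {F}.
Arguments mu4 {F}.
Arguments mu5 {F}.

Ltac kercase X0 X1 X2 X3 X4 X5 :=
  rewrite /lin /genJ /relLR /= ?big_cons ?big_nil /= ?X0 ?X1 ?X2 ?X3 ?X4 ?X5 /ds ?ffunE.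

Section Cases.
Variable F : fieldType.
Variable x : 'I_6 -> F.

Lemma ker4 (s : F) (X0 : x (inord 0) = 0) (X1 : x (inord 1) = 0) (X2 : x (inord 2) = 0)
  (X3 : x (inord 3) = 0) (X4 : x (inord 4) = s) (X5 : x (inord 5) = 0) :
  forall g tau, validJ 4 g ->
  lin (fun t => (nf4 s t).1 * ds F (nf4 s t).2 tau) (genJ x g) = 0.
Proof.
move=> g tau /validJ_shape [a [b [c [d [->|[->|[->|[->|->]]]]]]]];
  kercase X0 X1 X2 X3 X4 X5; ring.
Qed.


Lemma ker1 (X0 : x (inord 0) = 1) (X1 : x (inord 1) = 0) (X2 : x (inord 2) = 0)
  (X3 : x (inord 3) = 0) (X4 : x (inord 4) = 0) (X5 : x (inord 5) = 0) :
  forall g tau, validJ 4 g ->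
  lin (fun t => 1 * ds F (leaves t) tau) (genJ x g) = 0.
Proof.
move=> g tau /validJ_shape [a [b [c [d [->|[->|[->|[->|->]]]]]]]];
  kercase X0 X1 X2 X3 X4 X5; ring.
Qed.

Lemma ker5 (s : F) (hs : s = 1 \/ s = -1) (X0 : x (inord 0) = 0) (X1 : x (inord 1) = 0) (X2 : x (inord 2) = 0)
  (X3 : x (inord 3) = 0) (X4 : x (inord 4) = 0) (X5 : x (inord 5) = s) :
  forall g tau, validJ 4 g ->
  lin (fun t => (nf5 s t).1 * ds F (nf5 s t).2 tau) (genJ x g) = 0.
Proof.
case: hs => E; rewrite {}E in X5 *;
move=> g tau /validJ_shape [a [b [c [d [->|[->|[->|[->|->]]]]]]]];
  kercase X0 X1 X2 X3 X4 X5; ring.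
Qed.

Lemma kermu4 (s : F) (hs : s = 1 \/ s = -1) (X0 : x (inord 0) = 0) (X1 : x (inord 1) = 0) (X2 : x (inord 2) = 0)
  (X3 : x (inord 3) = 0) (X4 : x (inord 4) = s) (X5 : x (inord 5) = 0) :
  forall g, validJ 4 g -> lin (mu4 s) (genJ x g) = 0.
Proof.
case: hs => E; rewrite {}E in X4 *;
move=> g /validJ_shape [a [b [c [d [->|[->|[->|[->|->]]]]]]]];
  kercase X0 X1 X2 X3 X4 X5; ring.
Qed.

Lemma kermu5 (s : F) (hs : s = 1 \/ s = -1) (X0 : x (inord 0) = 0) (X1 : x (inord 1) = 0) (X2 : x (inord 2) = 0)
  (X3 : x (inord 3) = 0) (X4 : x (inord 4) = 0) (X5 : x (inord 5) = s) :
  forall g, validJ 4 g -> lin (mu5 s) (genJ x g) = 0.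
Proof.
case: hs => E; rewrite {}E in X5 *;
move=> g /validJ_shape [a [b [c [d [->|[->|[->|[->|->]]]]]]]];
  kercase X0 X1 X2 X3 X4 X5; ring.
Qed.

End Cases.

Ltac permtac H := apply: (pt H); apply/seq.permP => P /=; lia.

Section Final.
Variable F : fieldType.
Variable x : 'I_6 -> F.

Lemma inJ_self (m : tm) : inJ x 4 [:: (1, m); (- 1, m)].
Proof.
apply: inJ_ext (inJ_nil _ _ _) => t0.
by rewrite !coef_cons !coef_nil /= !ifE; ring.
Qed.

Lemma good1 (X0 : x (inord 0) = 1) (X1 : x (inord 1) = 0) (X2 : x (inord 2) = 0)
  (X3 : x (inord 3) = 0) (X4 : x (inord 4) = 0) (X5 : x (inord 5) = 0) : regular4 x.
Proof.
apply: (@regular_of F x (fun _ => 1) leaves).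
- by move=> t mt.
- by move=> s t mt; rewrite leaves_act4.
- by [].
- move=> t mt; have [a [b [c [d [H Hs]]]]] := multilin_shape _ mt.
  case: Hs => [->|[->|[->|[->|->]]]].
  + by have := @red_0_1 _ _ _ X0 X1 X2 X3 X4 X5 _ _ _ _ H; rewrite expr1n.
  + by have := @red_0_2 _ _ _ X0 X1 X2 X3 X4 X5 _ _ _ _ H; rewrite expr1n.
  + exact: (@red_0_3 _ _ _ X0 X1 X2 X3 X4 X5 _ _ _ _ H).
  + exact: (@red_0_4 _ _ _ X0 X1 X2 X3 X4 X5 _ _ _ _ H).
  + exact: (@red_0_5 _ _ _ X0 X1 X2 X3 X4 X5 _ _ _ _ H).
- exact: ker1.
Qed.

Lemma good2 (s : F) (nz : 1 - s ^+ 2 != 0) (X0 : x (inord 0) = 0) (X1 : x (inord 1) = 0) (X2 : x (inord 2) = 0)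
  (X3 : x (inord 3) = 0) (X4 : x (inord 4) = s) (X5 : x (inord 5) = 0) : regular4 x.
Proof.
apply: (@regular_of F x (fun t => (nf4 s t).1) (fun t => (nf4 s t).2)).
- move=> t mt; have [a [b [c [d [H Hs]]]]] := multilin_shape _ mt.
  by case: Hs => [->|[->|[->|[->|->]]]] /=; permtac H.
- move=> s' t mt; have [a [b [c [d [H Hs]]]]] := multilin_shape _ mt.
  by case: Hs => [->|[->|[->|[->|->]]]].
- by [].
- move=> t mt; have [a [b [c [d [H Hs]]]]] := multilin_shape _ mt.
  case: Hs => [->|[->|[->|[->|->]]]].
  + exact: (@red_4_1 _ _ _ X0 X1 X2 X3 X4 X5 _ _ _ _ H).
  + exact: (@red_4_2 _ _ _ X0 X1 X2 X3 X4 X5 _ _ _ _ H).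
  + exact: (@red_4_3 _ _ _ X0 X1 X2 X3 X4 X5 nz _ _ _ _ H).
  + exact: (@red_4_4 _ _ _ X0 X1 X2 X3 X4 X5 _ _ _ _ H).
  + exact: (@red_4_5 _ _ _ X0 X1 X2 X3 X4 X5 _ _ _ _ H).
- exact: ker4.
Qed.


Lemma bad_0 (t : F) (t0 : t != 0) (t1 : t != 1) (X0 : x (inord 0) = t) (X1 : x (inord 1) = 0) (X2 : x (inord 2) = 0) (X3 : x (inord 3) = 0) (X4 : x (inord 4) = 0) (X5 : x (inord 5) = 0) : ~ regular4 x.
Proof.
have nz : - t ^+ 2 + t ^+ 3 != 0.
  rewrite (_ : - t ^+ 2 + t ^+ 3 = t ^+ 2 * (t - 1)); last by ring.
  by rewrite mulf_neq0 ?expf_neq0 // subr_eq0.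
apply: (@small_contra F x mk5s).
- move=> sq psq; by rewrite /multilin (leaves_mk5s (perm_size4 psq)).
- move=> m mt; have [a [b [c [d [H Hs]]]]] := multilin_shape _ mt.
  case: Hs => [->|[->|[->|[->|->]]]]; (eexists; eexists; split; last first);
  [ exact: (@red_0_1 _ _ _ X0 X1 X2 X3 X4 X5 _ _ _ _ H) | permtac H | exact: (@red_0_2 _ _ _ X0 X1 X2 X3 X4 X5 _ _ _ _ H) | permtac H | exact: (@red_0_3 _ _ _ X0 X1 X2 X3 X4 X5 _ _ _ _ H) | permtac H | exact: (@red_0_4 _ _ _ X0 X1 X2 X3 X4 X5 _ _ _ _ H) | permtac H | exact: (@red_0_5 _ _ _ X0 X1 X2 X3 X4 X5 _ _ _ _ H) | permtac H].
- eexists; eexists; eexists; split; last first.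
    exact: (@dep_0 _ _ _ X0 X1 X2 X3 X4 X5 nz).
  all: by [].
Qed.

Lemma bad_1 (t : F) (t0 : t != 0) (X0 : x (inord 0) = 0) (X1 : x (inord 1) = t) (X2 : x (inord 2) = 0) (X3 : x (inord 3) = 0) (X4 : x (inord 4) = 0) (X5 : x (inord 5) = 0) : ~ regular4 x.
Proof.

apply: (@small_contra F x mk5s).
- move=> sq psq; by rewrite /multilin (leaves_mk5s (perm_size4 psq)).
- move=> m mt; have [a [b [c [d [H Hs]]]]] := multilin_shape _ mt.
  case: Hs => [->|[->|[->|[->|->]]]]; (eexists; eexists; split; last first);
  [ exact: (@red_1_1 _ _ _ X0 X1 X2 X3 X4 X5 _ _ _ _ H) | permtac H | exact: (@red_1_2 _ _ _ X0 X1 X2 X3 X4 X5 _ _ _ _ H) | permtac H | exact: (@red_1_3 _ _ _ X0 X1 X2 X3 X4 X5 _ _ _ _ H) | permtac H | exact: (@red_1_4 _ _ _ X0 X1 X2 X3 X4 X5 _ _ _ _ H) | permtac H | exact: (@red_1_5 _ _ _ X0 X1 X2 X3 X4 X5 _ _ _ _ H) | permtac H].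
- eexists; eexists; eexists; split; last first.
    exact: (@dep_1 _ _ _ X0 X1 X2 X3 X4 X5 t0).
  all: by [].
Qed.

Lemma bad_2 (t : F) (t0 : t != 0) (X0 : x (inord 0) = 0) (X1 : x (inord 1) = 0) (X2 : x (inord 2) = t) (X3 : x (inord 3) = 0) (X4 : x (inord 4) = 0) (X5 : x (inord 5) = 0) : ~ regular4 x.
Proof.

apply: (@small_contra F x mk5s).
- move=> sq psq; by rewrite /multilin (leaves_mk5s (perm_size4 psq)).
- move=> m mt; have [a [b [c [d [H Hs]]]]] := multilin_shape _ mt.
  case: Hs => [->|[->|[->|[->|->]]]]; (eexists; eexists; split; last first);
  [ exact: (@red_2_1 _ _ _ X0 X1 X2 X3 X4 X5 _ _ _ _ H) | permtac H | exact: (@red_2_2 _ _ _ X0 X1 X2 X3 X4 X5 _ _ _ _ H) | permtac H | exact: (@red_2_3 _ _ _ X0 X1 X2 X3 X4 X5 _ _ _ _ H) | permtac H | exact: (@red_2_4 _ _ _ X0 X1 X2 X3 X4 X5 _ _ _ _ H) | permtac H | exact: (@red_2_5 _ _ _ X0 X1 X2 X3 X4 X5 _ _ _ _ H) | permtac H].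
- eexists; eexists; eexists; split; last first.
    exact: (@dep_2 _ _ _ X0 X1 X2 X3 X4 X5 t0).
  all: by [].
Qed.

Lemma bad_3 (t : F) (t0 : t != 0) (X0 : x (inord 0) = 0) (X1 : x (inord 1) = 0) (X2 : x (inord 2) = 0) (X3 : x (inord 3) = t) (X4 : x (inord 4) = 0) (X5 : x (inord 5) = 0) : ~ regular4 x.
Proof.

apply: (@small_contra F x mk5s).
- move=> sq psq; by rewrite /multilin (leaves_mk5s (perm_size4 psq)).
- move=> m mt; have [a [b [c [d [H Hs]]]]] := multilin_shape _ mt.
  case: Hs => [->|[->|[->|[->|->]]]]; (eexists; eexists; split; last first);
  [ exact: (@red_3_1 _ _ _ X0 X1 X2 X3 X4 X5 _ _ _ _ H) | permtac H | exact: (@red_3_2 _ _ _ X0 X1 X2 X3 X4 X5 _ _ _ _ H) | permtac H | exact: (@red_3_3 _ _ _ X0 X1 X2 X3 X4 X5 _ _ _ _ H) | permtac H | exact: (@red_3_4 _ _ _ X0 X1 X2 X3 X4 X5 _ _ _ _ H) | permtac H | exact: (@red_3_5 _ _ _ X0 X1 X2 X3 X4 X5 _ _ _ _ H) | permtac H].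
- eexists; eexists; eexists; split; last first.
    exact: (@dep_3 _ _ _ X0 X1 X2 X3 X4 X5 t0).
  all: by [].
Qed.

Lemma bad_5s (t : F) (t0 : t != 0) (t2 : t ^+ 2 != 1) (X0 : x (inord 0) = 0) (X1 : x (inord 1) = 0) (X2 : x (inord 2) = 0)
  (X3 : x (inord 3) = 0) (X4 : x (inord 4) = 0) (X5 : x (inord 5) = t) : ~ regular4 x.
Proof.
have nz : t ^+ 3 - t != 0.
  rewrite (_ : t ^+ 3 - t = t * (t ^+ 2 - 1)); last by ring.
  by rewrite mulf_neq0 // subr_eq0.
apply: (@small_contra F x mk3s).
- move=> sq psq; by rewrite /multilin (leaves_mk3s (perm_size4 psq)).
- move=> m mt; have [a [b [c [d [H Hs]]]]] := multilin_shape _ mt.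
  case: Hs => [->|[->|[->|[->|->]]]].
  + by exists 0, [:: a; b; c; d]; split; [exact H | exact: (@z5_1 _ _ _ X0 X1 X2 X3 X4 X5 nz _ _ _ _ H)].
  + by exists 0, [:: a; b; c; d]; split; [exact H | exact: (@z5_2 _ _ _ X0 X1 X2 X3 X4 X5 nz _ _ _ _ H)].
  + by exists 1, [:: a; b; c; d]; split; [exact H | exact: inJ_self].
  + by exists 0, [:: a; b; c; d]; split; [exact H | exact: (@z5_4 _ _ _ X0 X1 X2 X3 X4 X5 nz _ _ _ _ H)].
  + by exists 0, [:: a; b; c; d]; split; [exact H | exact: (@z5_5 _ _ _ X0 X1 X2 X3 X4 X5 nz _ _ _ _ H)].
- eexists; eexists; eexists; split; last first.
    exact: (@dep_5 _ _ _ X0 X1 X2 X3 X4 X5).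
  all: by [].
Qed.

Definition Lbig (i : option {perm 'I_4}) : fsum F :=
  if i is Some tau then [:: (1, mk5s (tseq tau))] else [:: (1, mk3s [:: 0; 1; 2; 3]%N)].

Lemma Lbig_T i : inT 4 (Lbig i).
Proof.
case: i => [tau|] //=; by rewrite andbT /multilin leaves_mk5s ?size_tseq ?tseq_perm.
Qed.

Lemma big_4 (t : F) (ht : t = 1 \/ t = -1) (X0 : x (inord 0) = 0) (X1 : x (inord 1) = 0) (X2 : x (inord 2) = 0)
  (X3 : x (inord 3) = 0) (X4 : x (inord 4) = t) (X5 : x (inord 5) = 0) : ~ regular4 x.
Proof.
apply: (@big_contra F x Lbig
   (fun j => if j is Some tau then (fun m => (nf4 t m).1 * ds F (nf4 t m).2 tau) else mu4 t)).
- exact: Lbig_T.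
- case=> [tau|] g vg /=; [exact: ker4 | exact: kermu4].
- case=> [tau|] [tau'|] /=; rewrite /lin big_cons big_nil /=.
  + have [a [b [c [d E]]]] := seq4 (size_tseq tau).
    rewrite E /= /ds ffunE -E (inj_eq tseq_inj) eq_sym; ring.
  + have [a [b [c [d E]]]] := seq4 (size_tseq tau).
    ring.
  + ring.
  + ring.
Qed.

Lemma big_5 (t : F) (ht : t = 1 \/ t = -1) (X0 : x (inord 0) = 0) (X1 : x (inord 1) = 0) (X2 : x (inord 2) = 0)
  (X3 : x (inord 3) = 0) (X4 : x (inord 4) = 0) (X5 : x (inord 5) = t) : ~ regular4 x.
Proof.
apply: (@big_contra F x Lbig
   (fun j => if j is Some tau then (fun m => (nf5 t m).1 * ds F (nf5 t m).2 tau) else mu5 t)).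
- exact: Lbig_T.
- case=> [tau|] g vg /=; [exact: ker5 | exact: kermu5].
- case=> [tau|] [tau'|] /=; rewrite /lin big_cons big_nil /=.
  + have [a [b [c [d E]]]] := seq4 (size_tseq tau).
    rewrite E /= /ds ffunE -E (inj_eq tseq_inj) eq_sym; ring.
  + ring.
  + ring.
  + ring.
Qed.

End Final.

Lemma xval (F : fieldType) (x : 'I_6 -> F) (i0 : 'I_6) t
  (Hxi : forall j, x j = if j == i0 then t else 0) k : (k < 6)%N ->
  x (inord k) = if k == val i0 then t else 0.
Proof. by move=> hk; rewrite Hxi -(inj_eq val_inj) /= inordK. Qed.

Lemma sq1 (F : fieldType) (t : F) : t ^+ 2 = 1 -> t = 1 \/ t = -1.
Proof.
move=> h; have : (t - 1) * (t + 1) == 0.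
  by rewrite (_ : (t - 1) * (t + 1) = t ^+ 2 - 1); [rewrite h subrr | ring].
by rewrite mulf_eq0 subr_eq0 addr_eq0 => /orP [/eqP ->|/eqP ->]; [left|right].
Qed.

Theorem mainTheorem9 (F : fieldType) (charF0 : [pchar F] =i pred0) (x : 'I_6 -> F)
  (hx : forall i j : 'I_6, x i != 0 -> x j != 0 -> i = j) :
  regular4 x <->
  ((forall i : 'I_6, x i = if val i == 0%N then 1 else 0) \/
   (exists s : F, [/\ s != 1, s != -1 &
      forall i : 'I_6, x i = if val i == 4%N then s else 0])).
Proof.
split.
- move=> reg.
  case: (pickP (fun i => x i != 0)) => [i0 nz0 | all0]; last first.
    right; exists 0; split.
    + by rewrite eq_sym oner_eq0.
    + by rewrite eq_sym oppr_eq0 oner_eq0.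
    + move=> i; have := all0 i => /= /negbFE /eqP ->; by case: ifP.
  have Hxi : forall j, x j = if j == i0 then x i0 else 0.
    move=> j; case: eqP => [->//|ne]; apply/eqP; apply: contraT => nzj.
    by case: ne; apply: hx.
  move: nz0 Hxi; set t := x i0 => nz0 Hxi.
  have X := xval _ _ _ _ Hxi.
  have X0 := X 0%N isT; have X1 := X 1%N isT; have X2 := X 2%N isT.
  have X3 := X 3%N isT; have X4 := X 4%N isT; have X5 := X 5%N isT.
  case: i0 @t nz0 Hxi X0 X1 X2 X3 X4 X5 {X} => [[|[|[|[|[|[|//]]]]]] Hi] t /= nz0 Hxi X0 X1 X2 X3 X4 X5.
  + case: (eqVneq t 1) => [t1|t1]; last by exfalso; exact: (@bad_0 F x t nz0 t1 X0 X1 X2 X3 X4 X5).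
    left => i; rewrite Hxi -t1 -(inj_eq val_inj) //.
  + by exfalso; exact: (@bad_1 F x t nz0 X0 X1 X2 X3 X4 X5).
  + by exfalso; exact: (@bad_2 F x t nz0 X0 X1 X2 X3 X4 X5).
  + by exfalso; exact: (@bad_3 F x t nz0 X0 X1 X2 X3 X4 X5).
  + case: (eqVneq (t ^+ 2) 1) => [t2|t2].
      by exfalso; exact: (@big_4 F x t (sq1 _ _ t2) X0 X1 X2 X3 X4 X5).
    right; exists t; split.
    * by apply: contra t2 => /eqP ->; rewrite expr1n.
    * by apply: contra t2 => /eqP ->; rewrite sqrrN expr1n.
    * by move=> i; rewrite Hxi -(inj_eq val_inj).
  + case: (eqVneq (t ^+ 2) 1) => [t2|t2].
      by exfalso; exact: (@big_5 F x t (sq1 _ _ t2) X0 X1 X2 X3 X4 X5).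
    by exfalso; exact: (@bad_5s F x t nz0 t2 X0 X1 X2 X3 X4 X5).
- case=> [Hx | [s [s1 s2 Hx]]].
    by apply: good1; rewrite Hx /= inordK.
  apply: (@good2 F x s); try by rewrite Hx /= inordK.
  rewrite (_ : 1 - s ^+ 2 = (1 - s) * (1 + s)); last by ring.
  rewrite mulf_neq0 //; first by rewrite subr_eq0 eq_sym.
  by rewrite addrC addr_eq0.
Qed.
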